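(* For $k$ sufficiently large and every $\ell\in\mathbb Z/D\mathbb Z$, $\gamma^-_{-\ell}=-\gamma^+_\ell$.
   Context: Standing setup. $(E,\omega)$ is a real $2$-dimensional symplectic vector space with a compatible linear complex structure $j$; $K_j=\{\alpha\in E^*\otimes\mathbb C:\alpha(j\cdot)=i\alpha\}$. A half-form line is a complex line $\delta$ with an isomorphism $\varphi:\delta^{\otimes2}\to K_j$; $\delta$ carries the Hermitian metric making $\varphi$ an isometry. For $v\in E\setminus\{0\}$, $\Omega_v$ denotes a vector of $\delta$ with $\varphi(\Omega_v^2)(v)=1$ (unique up to sign). $L\to E$ is the trivial Hermitian line bundle with connection $d-i\alpha$, where $\alpha_x(y)=\frac12\omega(x,y)$, and the compatible holomorphic structure; sections of $L^k\otimes\delta$ are identified with functions $E\to\delta$. For $k\in\mathbb Z_{>0}$ and $x\in E$, $T^*_x$ acts on sections of $L^k\otimes\delta$ by $(T^*_x\Psi)(y)=e^{-\frac{ik}{2}\omega(x,y)}\Psi(x+y)$. For a lattice $\Lambda\subset E$, $\mathcal H^\Lambda_k$ is the space of holomorphic sections $\Psi$ of $L^k\otimes\delta$ with $T^*_x\Psi=\Psi$ for all $x\in\Lambda$, with inner product $\langle\Psi_1,\Psi_2\rangle=\int_F\langle\Psi_1,\Psi_2\rangle_\delta\,|\omega|$ ($F$ a fundamental domain of $\Lambda$). For sequences, $O(k^{-\infty})$ means $O(k^{-N})$ for every $N$. Knot state. Fix relatively prime positive integers $a,b$; $D=2ab$. Fix a basis $(\lambda,\mu)$ of $E$ with $\omega(\mu,\lambda)=4\pi$.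 $\mathcal H_k=\mathcal H_k^{\lambda\mathbb Z\oplus\mu\mathbb Z}$; $M=T^*_{\mu/2k}$, $L=T^*_{-\lambda/2k}$ (operators), $q=e^{i\pi/k}$, $q^{s/D}=e^{i\pi s/(kD)}$. Fix $\Omega_\mu$; $(\xi_\ell)_{\ell\in\mathbb Z/2k\mathbb Z}$ is the orthonormal basis of $\mathcal H_k$ with $M\xi_\ell=q^\ell\xi_\ell$, $L\xi_\ell=\xi_{\ell-1}$, $\xi_0(0)\in\mathbb R_{>0}\Omega_\mu$. For $\ell\ge1$, $J_\ell(t)=\frac{t^{ab(1-\ell^2)}}{t^2-t^{-2}}\sum_{r}t^{4abr^2}\bigl(t^{-4(a+b)r+2}-t^{-4(a-b)r-2}\bigr)$, $r$ running over $-\frac{\ell-1}2,-\frac{\ell-1}2+1,\dots,\frac{\ell-1}2$ (colored Jones polynomials of the $(a,b)$ torus knot); $J_0=0$, $J_{-\ell}=-J_\ell$; $\ell\mapsto J_\ell(-e^{i\pi/2k})$ is $2k$-periodic. The knot state is $Z_k=\frac{\sin(\pi/k)}{\sqrt k}\sum_{\ell\in\mathbb Z/2k\mathbb Z}J_\ell(-e^{i\pi/2k})\xi_\ell$, and $Z^0_k=-\frac{i}{2\sqrt k}\sum_{\ell\in\mathbb Z/2k\mathbb Z}\xi_\ell$. Second lattice. $\Omega_\lambda$ is the (fixed, $k$-independent) choice of sign with $Z^0_k(0)=\frac{e^{3i\pi/4}}{\sqrt2}(\frac{k}{2\pi})^{1/4}\Omega_\lambda+O(k^{-\infty})$. $R_D=D\mu\mathbb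 Z\oplus\lambda\mathbb Z$, $\mathcal H_{D,k}=\mathcal H_k^{R_D}\supset\mathcal H_k$ ($\dim=2kD$). $S=T^*_{-\lambda/2kD}$, $R=T^*_{(D\mu-2\lambda)/2kD}$. $(\Psi_n)_{n\in\mathbb Z/2kD\mathbb Z}$ is the orthonormal basis of $\mathcal H_{D,k}$ with $S\Psi_n=q^{n/D}\Psi_n$, $R\Psi_n=\Psi_{n+1}$ and phase such that $\Psi_0(0)=e^{i\pi/4}(\frac k{2\pi})^{1/4}\Omega_\lambda+O(k^{-\infty})$. $\Phi_\ell=\frac1{\sqrt{2kD}}\sum_{n\in\mathbb Z/2kD\mathbb Z}e^{2i\pi n\ell/D}\Psi_n$ ($\ell\in\mathbb Z/D\mathbb Z$). $E_{k,+}$ (resp. $E_{k,-}$) is the span of the $\Psi_n$ with $-ab+a+b\le n<2k-ab-a-b$ (resp. $-2k-ab+a+b\le n<-ab-a-b$); $\perp$ is the orthogonal complement in $\mathcal H_{D,k}$. For $k$ large, $\gamma^\pm_\ell$ ($\ell\in\mathbb Z/D\mathbb Z$) are the unique complex numbers with $Z_k-\sum_\ell\gamma^\pm_\ell\Phi_\ell\in E_{k,\pm}^\perp$. *)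

(* Defs.v *)
From Stdlib Require Import Reals Lra Lia ZArith.
Open Scope R_scope.

Definition Cplx : Type := (R * R)%type.
Definition RtoC (r : R) : Cplx := (r, 0).
Definition C0 : Cplx := (0, 0).
Definition C1 : Cplx := (1, 0).
Definition Ci : Cplx := (0, 1).
Definition Cadd (z w : Cplx) : Cplx := (fst z + fst w, snd z + snd w).
Definition Copp (z : Cplx) : Cplx := (- fst z, - snd z).
Definition Csub (z w : Cplx) : Cplx := Cadd z (Copp w).
Definition Cmul (z w : Cplx) : Cplx :=
  (fst z * fst w - snd z * snd w, fst z * snd w + snd z * fst w).
Definition Cscal (r : R) (z : Cplx) : Cplx := (r * fst z, r * snd z).
Definition Cconj (z : Cplx) : Cplx := (fst z, - snd z).
Definition Cnorm (z : Cplx) : R := sqrt (fst z * fst z + snd z * snd z).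
Definition Cinv (z : Cplx) : Cplx :=
  let d := fst z * fst z + snd z * snd z in (fst z / d, - snd z / d).
Definition Cdiv (z w : Cplx) : Cplx := Cmul z (Cinv w).
Definition cis (theta : R) : Cplx := (cos theta, sin theta).

Fixpoint Csum (f : Z -> Cplx) (n : nat) : Cplx :=
  match n with
  | O => C0
  | S m => Cadd (Csum f m) (f (Z.of_nat m))
  end.

(* E = R^2, omega(x,y) = x1 y2 - x2 y1, j(x1,x2) = (-x2,x1) (compatible:
   omega(x, j y) is the Euclidean inner product).  K_j is spanned by
   dz = dx + i dy; the half-form line delta is C with phi(w^2) = w^2 dz. *)
Definition E : Type := (R * R)%type.
Definition Eadd (x y : E) : E := (fst x + fst y, snd x + snd y).
Definition Escal (r : R) (x : E) : E := (r * fst x, r * snd x).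
Definition omega (x y : E) : R := fst x * snd y - snd x * fst y.
Definition jE (x : E) : E := (- snd x, fst x).
Definition dz (v : E) : Cplx := (fst v, snd v).
(* Omega_v : phi(Omega_v^2)(v) = 1 *)
Definition is_Omega (v : E) (w : Cplx) : Prop := Cmul (Cmul w w) (dz v) = C1.
(* Hermitian product on delta making phi an isometry:
   |dz|^2 = 2 for the metric g = omega(., j .), hence <w1,w2> = sqrt 2 w1 conj(w2). *)
Definition hdelta (w1 w2 : Cplx) : Cplx := Cscal (sqrt 2) (Cmul w1 (Cconj w2)).

(* sections of L^k (x) delta, identified with functions E -> delta = C *)
Definition Sec : Type := E -> Cplx.

Definition diff_at (f : Sec) (p : E) (dx dy : Cplx) : Prop :=
  forall eps, 0 < eps -> exists del, 0 < del /\
    forall h1 h2, h1 * h1 + h2 * h2 < del * del ->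
      Cnorm (Csub (Csub (f (fst p + h1, snd p + h2)) (f p))
                  (Cadd (Cscal h1 dx) (Cscal h2 dy)))
      <= eps * sqrt (h1 * h1 + h2 * h2).

(* holomorphic sections of L^k (x) delta: L has connection d - i alpha,
   alpha_x(y) = omega(x,y)/2, so the condition nabla_{d_x} + i nabla_{d_y} = 0
   (the (0,1)-part of the connection of L^k) reads
   d_x Psi + i d_y Psi + (k/2) z Psi = 0,  z = x1 + i x2. *)
Definition holo (k : nat) (f : Sec) : Prop :=
  forall p, exists dx dy, diff_at f p dx dy /\
    Cadd (Cadd dx (Cmul Ci dy)) (Cmul (Cscal (INR k / 2) (dz p)) (f p)) = C0.

Definition Tstar (k : nat) (x : E) (f : Sec) : Sec :=
  fun y => Cmul (cis (- (INR k / 2) * omega x y)) (f (Eadd x y)).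

Definition in_H (k : nat) (u v : E) (f : Sec) : Prop :=
  holo k f /\
  forall (m n : Z) (y : E),
    Tstar k (Eadd (Escal (IZR m) u) (Escal (IZR n) v)) f y = f y.

Definition int01 (g : R -> R -> R) (val : R) : Prop :=
  exists (pr_s : forall t, Riemann_integrable (fun s => g s t) 0 1)
         (pr_t : Riemann_integrable (fun t => RiemannInt (pr_s t)) 0 1),
    RiemannInt pr_t = val.

(* inner product of H^Lambda: integral over the fundamental domain
   F = {s u + t v : s,t in [0,1)} of <Psi1,Psi2>_delta |omega|,
   i.e. |omega(u,v)| * int_{[0,1]^2} <Psi1,Psi2>(s u + t v) ds dt *)
Definition inner_on (u v : E) (f1 f2 : Sec) (c : Cplx) : Prop :=
  let g s t := hdelta (f1 (Eadd (Escal s u) (Escal t v)))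
                      (f2 (Eadd (Escal s u) (Escal t v))) in
  exists r1 r2, int01 (fun s t => fst (g s t)) r1 /\
                int01 (fun s t => snd (g s t)) r2 /\
                c = Cscal (Rabs (omega u v)) (r1, r2).

Definition kron (b : bool) : Cplx := if b then C1 else C0.

Definition Slin (c : Z -> Cplx) (f : Z -> Sec) (n : nat) : Sec :=
  fun y => Csum (fun i => Cmul (c i) (f i y)) n.

(* (xi_l)_{l in Z/2kZ}: orthonormal basis of H_k with M xi_l = q^l xi_l,
   L xi_l = xi_{l-1}, xi_0(0) in R_{>0} Omega_mu. Indexed by Z, 2k-periodic. *)
Definition is_xi_basis (k : nat) (lam mu : E) (Omu : Cplx) (xi : Z -> Sec) : Prop :=
  let K := Z.of_nat (2 * k) in
  (forall l y, xi (l + K)%Z y = xi l y) /\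
  (forall l, in_H k lam mu (xi l)) /\
  (forall l m, (0 <= l < K)%Z -> (0 <= m < K)%Z ->
     inner_on lam mu (xi l) (xi m) (kron (Z.eqb l m))) /\
  (forall f, in_H k lam mu f -> exists c, forall y, f y = Slin c xi (2 * k) y) /\
  (forall l y, Tstar k (Escal (/ (2 * INR k)) mu) (xi l) y
               = Cmul (cis (PI * IZR l / INR k)) (xi l y)) /\
  (forall l y, Tstar k (Escal (- / (2 * INR k)) lam) (xi l) y = xi (l - 1)%Z y) /\
  (exists r, 0 < r /\ xi 0%Z (0, 0) = Cscal r Omu).

(* (Psi_n)_{n in Z/2kDZ}: orthonormal basis of H_{D,k} = H_k^{D mu Z + lam Z}
   with S Psi_n = q^{n/D} Psi_n, R Psi_n = Psi_{n+1}.  Indexed by Z, 2kD-periodic. *)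
Definition is_Psi_basis (k D : nat) (lam mu : E) (Psi : Z -> Sec) : Prop :=
  let N := Z.of_nat (2 * k * D) in
  let u := Escal (INR D) mu in
  (forall n y, Psi (n + N)%Z y = Psi n y) /\
  (forall n, in_H k u lam (Psi n)) /\
  (forall n m, (0 <= n < N)%Z -> (0 <= m < N)%Z ->
     inner_on u lam (Psi n) (Psi m) (kron (Z.eqb n m))) /\
  (forall f, in_H k u lam f -> exists c, forall y, f y = Slin c Psi (2 * k * D) y) /\
  (forall n y, Tstar k (Escal (- / (2 * INR k * INR D)) lam) (Psi n) y
               = Cmul (cis (PI * IZR n / (INR k * INR D))) (Psi n y)) /\
  (forall n y, Tstar k (Escal (/ (2 * INR k * INR D))
                       (Eadd u (Escal (-2) lam))) (Psi n) y = Psi (n + 1)%Z y).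

(* t^m for t = -e^{i pi/2k} = e^{i pi (1 + 1/(2k))}, m an integer *)
Definition tpow (k : nat) (m : Z) : Cplx := cis (PI * (1 + / (2 * INR k)) * IZR m).

(* colored Jones polynomial J_l(t) of the (a,b) torus knot at t = -e^{i pi/2k},
   l >= 1; writing s = 2r = 2j - (l-1), j = 0..l-1:
   J_l = t^{ab(1-l^2)}/(t^2-t^{-2}) sum_j t^{ab s^2}(t^{-2(a+b)s+2} - t^{-2(a-b)s-2});
   J_0 = 0. *)
Definition Jval (a b k : nat) (l : nat) : Cplx :=
  match l with
  | O => C0
  | _ =>
    let A := Z.of_nat a in let B := Z.of_nat b in let L := Z.of_nat l in
    Cdiv
      (Cmul (tpow k (A * B * (1 - L * L))%Z)
        (Csum (fun j => let s := (2 * j - (L - 1))%Z in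
           Cmul (tpow k (A * B * s * s)%Z)
                (Csub (tpow k (- 2 * (A + B) * s + 2)%Z)
                      (tpow k (- 2 * (A - B) * s - 2)%Z))) l))
      (Csub (tpow k 2%Z) (tpow k (-2)%Z))
  end.

Definition knot_state (a b k : nat) (xi : Z -> Sec) : Sec :=
  fun y => Cscal (sin (PI / INR k) / sqrt (INR k))
             (Csum (fun l => Cmul (Jval a b k (Z.to_nat l)) (xi l y)) (2 * k)).

Definition Z0_state (k : nat) (xi : Z -> Sec) : Sec :=
  fun y => Cmul (Cscal (- / (2 * sqrt (INR k))) Ci) (Csum (fun l => xi l y) (2 * k)).

Definition Phi (k D : nat) (Psi : Z -> Sec) (l : Z) : Sec :=
  fun y => Cscal (/ sqrt (INR (2 * k * D)))
     (Csum (fun n => Cmul (cis (2 * PI * IZR n * IZR l / INR D)) (Psi n y)) (2 * k * D)).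

Definition O_inf (u : nat -> R) : Prop :=
  forall N : nat, exists Cst, forall k : nat, (1 <= k)%nat -> Rabs (u k) <= Cst / (INR k ^ N).

(* gamma^{+/-}: Z_k - sum_l gamma_l Phi_l is orthogonal (in H_{D,k}) to E_{k,+/-},
   the span of the Psi_n with lo <= n < hi. *)
Definition gamma_cond (k D : nat) (lam mu : E) (Zk : Sec) (Psi : Z -> Sec)
    (lo hi : Z) (g : Z -> Cplx) : Prop :=
  forall n, (lo <= n < hi)%Z ->
    inner_on (Escal (INR D) mu) lam
      (fun y => Csub (Zk y) (Slin g (Phi k D Psi) D y)) (Psi n) C0.

(* Main.v *)
Require Import Defs.
From Stdlib Require Import Reals ZArith.
From Stdlib Require Import Lra Lia List Permutation Znumtheory.
From Coquelicot Require Import Coquelicot.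
Import Defs.
Open Scope R_scope.

Ltac cdes := repeat match goal with z : Cplx |- _ => destruct z end.
Ltac cunf := unfold Csub, Cadd, Copp, Cmul, Cscal, Cconj, C0, C1, Ci, RtoC.
Ltac ceq := first [cunf; simpl; f_equal; ring | cdes; cunf; simpl; f_equal; ring].

Lemma Cadd_comm z w : Cadd z w = Cadd w z. Proof. ceq. Qed.
Lemma Cadd_assoc z w v : Cadd (Cadd z w) v = Cadd z (Cadd w v). Proof. ceq. Qed.
Lemma Cadd_0l z : Cadd C0 z = z. Proof. ceq. Qed.
Lemma Cadd_0r z : Cadd z C0 = z. Proof. ceq. Qed.
Lemma Cmul_comm z w : Cmul z w = Cmul w z. Proof. ceq. Qed.
Lemma Cmul_assoc z w v : Cmul (Cmul z w) v = Cmul z (Cmul w v). Proof. ceq. Qed.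
Lemma Cmul_addr z w v : Cmul z (Cadd w v) = Cadd (Cmul z w) (Cmul z v). Proof. ceq. Qed.
Lemma Cmul_addl z w v : Cmul (Cadd w v) z = Cadd (Cmul w z) (Cmul v z). Proof. ceq. Qed.
Lemma Cmul_0r z : Cmul z C0 = C0. Proof. ceq. Qed.
Lemma Cmul_0l z : Cmul C0 z = C0. Proof. ceq. Qed.
Lemma Cmul_1l z : Cmul C1 z = z. Proof. ceq. Qed.
Lemma Cmul_1r z : Cmul z C1 = z. Proof. ceq. Qed.

Lemma cis_add a b : cis (a + b) = Cmul (cis a) (cis b).
Proof. unfold cis, Cmul; simpl; rewrite cos_plus, sin_plus; f_equal; ring. Qed.
Lemma cis_0 : cis 0 = C1.
Proof. unfold cis, C1; rewrite cos_0, sin_0; reflexivity. Qed.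
Lemma cis_2piZ x z : cis (x + 2 * PI * IZR z) = cis x.
Proof.
  unfold cis. destruct (Z_le_gt_dec 0 z) as [H|H].
  - rewrite <- (Z2Nat.id z H), <- INR_IZR_INZ.
    replace (x + 2 * PI * INR (Z.to_nat z)) with (x + 2 * INR (Z.to_nat z) * PI) by ring.
    rewrite cos_period, sin_period; auto.
  - assert (H' : (0 <= - z)%Z) by lia.
    rewrite <- (Z.opp_involutive z), <- (Z2Nat.id (-z) H'), opp_IZR, <- INR_IZR_INZ.
    set (n := Z.to_nat (- z)).
    rewrite <- (cos_period (x + 2 * PI * - INR n) n), <- (sin_period (x + 2 * PI * - INR n) n).
    replace (x + 2 * PI * - INR n + 2 * INR n * PI) with x by ring. auto.
Qed.

Lemma Csum_ext f g n : (forall i, (0 <= i < Z.of_nat n)%Z -> f i = g i) -> Csum f n = Csum g n.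
Proof.
  induction n; intros H; simpl; auto. rewrite IHn, H; [reflexivity|lia|]. intros; apply H; lia.
Qed.
Lemma Csum_add f g n : Csum (fun i => Cadd (f i) (g i)) n = Cadd (Csum f n) (Csum g n).
Proof. induction n; simpl. ceq. rewrite IHn. ceq. Qed.
Lemma Csum_cmul c f n : Csum (fun i => Cmul c (f i)) n = Cmul c (Csum f n).
Proof. induction n; simpl. ceq. rewrite IHn. ceq. Qed.
Lemma Csum_opp f n : Csum (fun i => Copp (f i)) n = Copp (Csum f n).
Proof. induction n; simpl. ceq. rewrite IHn. ceq. Qed.
Lemma Csum_scal r f n : Csum (fun i => Cscal r (f i)) n = Cscal r (Csum f n).
Proof. induction n; simpl. ceq. rewrite IHn. ceq. Qed.
Lemma Csum_zero f n : (forall i, (0 <= i < Z.of_nat n)%Z -> f i = C0) -> Csum f n = C0.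
Proof. induction n; intros H; simpl; auto. rewrite IHn, H; [apply Cadd_0l|lia|]. intros; apply H; lia. Qed.
Lemma Csum_split f n m : Csum f (n + m) = Cadd (Csum f n) (Csum (fun i => f (i + Z.of_nat n)%Z) m).
Proof.
  induction m; simpl. rewrite Nat.add_0_r, Cadd_0r; reflexivity.
  rewrite Nat.add_succ_r; simpl. rewrite IHm. rewrite Cadd_assoc. f_equal. f_equal. f_equal. lia.
Qed.
Lemma Csum_single f n i0 : (0 <= i0 < Z.of_nat n)%Z ->
  (forall i, (0 <= i < Z.of_nat n)%Z -> i <> i0 -> f i = C0) -> Csum f n = f i0.
Proof.
  induction n; intros Hi H; simpl in *. lia.
  destruct (Z.eq_dec i0 (Z.of_nat n)) as [->|Hne].
  - rewrite Csum_zero. apply Cadd_0l. intros; apply H; lia.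
  - rewrite IHn, (H (Z.of_nat n)); try lia. apply Cadd_0r. intros; apply H; lia.
Qed.
Lemma Csum_swap (h : Z -> Z -> Cplx) n1 n2 :
  Csum (fun m => Csum (h m) n1) n2 = Csum (fun l => Csum (fun m => h m l) n2) n1.
Proof.
  induction n2; simpl. symmetry; apply Csum_zero; auto.
  rewrite IHn2, <- Csum_add. reflexivity.
Qed.

Definition zl (n : nat) : list Z := map Z.of_nat (seq 0 n).
Definition lsum (f : Z -> Cplx) (l : list Z) := fold_right (fun x acc => Cadd (f x) acc) C0 l.
Lemma lsum_app f l1 l2 : lsum f (l1 ++ l2) = Cadd (lsum f l1) (lsum f l2).
Proof. induction l1; simpl. rewrite Cadd_0l; auto. rewrite IHl1, Cadd_assoc; auto. Qed.
Lemma Csum_lsum f n : Csum f n = lsum f (zl n).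
Proof.
  induction n; auto. simpl Csum. unfold zl in *. rewrite seq_S, map_app, lsum_app, <- IHn.
  simpl. rewrite Cadd_0r; auto.
Qed.
Lemma lsum_perm f l1 l2 : Permutation l1 l2 -> lsum f l1 = lsum f l2.
Proof.
  induction 1; simpl; auto. rewrite IHPermutation; auto.
  rewrite <- !Cadd_assoc, (Cadd_comm (f y)); auto. congruence.
Qed.
Lemma lsum_map f g l : lsum f (map g l) = lsum (fun x => f (g x)) l.
Proof. induction l; simpl; congruence. Qed.
Lemma in_zl i n : In i (zl n) <-> (0 <= i < Z.of_nat n)%Z.
Proof.
  unfold zl; rewrite in_map_iff; split.
  - intros [x [<- Hx]]; apply in_seq in Hx; lia.
  - intros H; exists (Z.to_nat i); split. lia. apply in_seq; lia.
Qed.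
Lemma Csum_perm f (s : Z -> Z) n :
  (forall i, (0 <= i < Z.of_nat n)%Z -> (0 <= s i < Z.of_nat n)%Z) ->
  (forall i j, (0 <= i < Z.of_nat n)%Z -> (0 <= j < Z.of_nat n)%Z -> s i = s j -> i = j) ->
  Csum (fun i => f (s i)) n = Csum f n.
Proof.
  intros H1 H2. rewrite !Csum_lsum, <- lsum_map. apply lsum_perm.
  apply Permutation_map_same_l.
  - apply FinFun.Injective_map_NoDup_in. intros x y Hx Hy; apply in_zl in Hx, Hy; auto.
    unfold zl; apply FinFun.Injective_map_NoDup. intros x y; lia. apply seq_NoDup.
  - intros x Hx. apply in_map_iff in Hx. destruct Hx as [y [<- Hy]]. apply in_zl in Hy. apply in_zl; auto.
Qed.
Lemma Csum_rev f n : Csum (fun i => f (Z.of_nat n - 1 - i)%Z) n = Csum f n.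
Proof. apply Csum_perm; intros; lia. Qed.

Definition int01C (g : R -> R -> R) (v : R) : Prop :=
  (forall t, ex_RInt (fun s => g s t) 0 1) /\ is_RInt (fun t => RInt (fun s => g s t) 0 1) 0 1 v.

Lemma int01_C g v : int01 g v <-> int01C g v.
Proof.
  split.
  - intros [prs [prt Hv]]. split.
    + intros t; apply ex_RInt_Reals_1, prs.
    + assert (E : forall t, RiemannInt (prs t) = RInt (fun s => g s t) 0 1).
      { intros t; symmetry; apply RInt_Reals. }
      eapply is_RInt_ext. intros; apply E.
      rewrite <- Hv, <- (RInt_Reals _ _ _ prt). apply RInt_correct, ex_RInt_Reals_1, prt.
  - intros [Hs Ht].
    exists (fun t => ex_RInt_Reals_0 _ _ _ (Hs t)).
    assert (E : forall t, RInt (fun s => g s t) 0 1 = RiemannInt (ex_RInt_Reals_0 _ _ _ (Hs t))).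
    { intros t; apply RInt_Reals. }
    assert (Ht' : is_RInt (fun t => RiemannInt (ex_RInt_Reals_0 _ _ _ (Hs t))) 0 1 v).
    { eapply is_RInt_ext; [|exact Ht]. intros; apply E. }
    exists (ex_RInt_Reals_0 _ _ _ (ex_intro _ v Ht')).
    rewrite <- RInt_Reals. apply is_RInt_unique; auto.
Qed.

Lemma int01C_uniq g v1 v2 : int01C g v1 -> int01C g v2 -> v1 = v2.
Proof. intros [_ H1] [_ H2]. rewrite <- (is_RInt_unique _ _ _ _ H1). apply is_RInt_unique; auto. Qed.

Lemma int01C_ext g g' v : (forall s t, g s t = g' s t) -> int01C g v -> int01C g' v.
Proof.
  intros E [H1 H2]. split.
  - intros t; eapply ex_RInt_ext; [|apply H1]. intros; apply E.
  - eapply is_RInt_ext; [|exact H2]. intros. apply RInt_ext. intros; apply E.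
Qed.

Lemma exR_scal (f : R -> R) a b c : ex_RInt f a b -> ex_RInt (fun x => c * f x) a b.
Proof. intros H. exact (ex_RInt_scal f a b c H). Qed.
Lemma exR_plus (f g : R -> R) a b : ex_RInt f a b -> ex_RInt g a b -> ex_RInt (fun x => f x + g x) a b.
Proof. intros H1 H2. exact (ex_RInt_plus f g a b H1 H2). Qed.
Lemma isR_scal (f : R -> R) a b c l : is_RInt f a b l -> is_RInt (fun x => c * f x) a b (c * l).
Proof. intros H. exact (is_RInt_scal f a b c l H). Qed.
Lemma isR_plus (f g : R -> R) a b l1 l2 : is_RInt f a b l1 -> is_RInt g a b l2 -> is_RInt (fun x => f x + g x) a b (l1 + l2).
Proof. intros H1 H2. exact (is_RInt_plus f g a b l1 l2 H1 H2). Qed.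
Lemma RInt_lin2 (f g : R -> R) a b c d : ex_RInt f a b -> ex_RInt g a b ->
  RInt (fun x => c * f x + d * g x) a b = c * RInt f a b + d * RInt g a b.
Proof.
  intros H1 H2. apply is_RInt_unique. apply isR_plus; apply isR_scal;
  [exact (RInt_correct f a b H1)|exact (RInt_correct g a b H2)].
Qed.

Lemma int01C_lin g1 g2 v1 v2 a b : int01C g1 v1 -> int01C g2 v2 ->
  int01C (fun s t => a * g1 s t + b * g2 s t) (a * v1 + b * v2).
Proof.
  intros [A1 B1] [A2 B2]. split.
  - intros t. apply exR_plus; apply exR_scal; auto.
  - eapply is_RInt_ext. intros; symmetry; apply (RInt_lin2 (fun s => g1 s _) (fun s => g2 s _)); auto.
    apply isR_plus; apply isR_scal; auto.
Qed.

Lemma int01C_zero : int01C (fun _ _ => 0) 0.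
Proof.
  assert (Hc : is_RInt (fun _ : R => 0) 0 1 0).
  { pose proof (is_RInt_const 0 1 (0:R)) as H. unfold scal in H; simpl in H; unfold mult in H; simpl in H.
    rewrite Rmult_0_r in H. exact H. }
  split. intros; exists 0; exact Hc.
  eapply is_RInt_ext; [|exact Hc]. intros; simpl. symmetry. apply is_RInt_unique. exact Hc.
Qed.

Lemma inner_C u v f1 f2 c : inner_on u v f1 f2 c <->
  let g s t := hdelta (f1 (Eadd (Escal s u) (Escal t v))) (f2 (Eadd (Escal s u) (Escal t v))) in
  exists r1 r2, int01C (fun s t => fst (g s t)) r1 /\ int01C (fun s t => snd (g s t)) r2 /\
                c = Cscal (Rabs (omega u v)) (r1, r2).
Proof.
  unfold inner_on; simpl; split; intros [r1 [r2 [A [B C]]]]; exists r1, r2;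
  rewrite ?int01_C in *; rewrite <- ?int01_C in *; auto.
Qed.

Lemma IP_uniq u v f g c1 c2 : inner_on u v f g c1 -> inner_on u v f g c2 -> c1 = c2.
Proof.
  rewrite !inner_C; simpl. intros [a1 [b1 [A1 [B1 ->]]]] [a2 [b2 [A2 [B2 ->]]]].
  rewrite (int01C_uniq _ _ _ A1 A2), (int01C_uniq _ _ _ B1 B2); auto.
Qed.

Lemma IP_ext u v f g f' g' c : (forall y, f y = f' y) -> (forall y, g y = g' y) ->
  inner_on u v f g c -> inner_on u v f' g' c.
Proof.
  intros E1 E2. rewrite !inner_C; simpl. intros [a [b [A [B ->]]]]. exists a, b. split; [|split; auto].
  - eapply int01C_ext; [|exact A]. intros; simpl. rewrite E1, E2; auto.
  - eapply int01C_ext; [|exact B]. intros; simpl. rewrite E1, E2; auto.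
Qed.

Lemma IP_lin u v f1 f2 g c1 c2 a b : inner_on u v f1 g c1 -> inner_on u v f2 g c2 ->
  inner_on u v (fun y => Cadd (Cmul a (f1 y)) (Cmul b (f2 y))) g (Cadd (Cmul a c1) (Cmul b c2)).
Proof.
  rewrite !inner_C; simpl. intros [x1 [y1 [A1 [B1 ->]]]] [x2 [y2 [A2 [B2 ->]]]].
  destruct a as [a1 a2], b as [b1 b2].
  exists (1 * (a1 * x1 + - a2 * y1) + 1 * (b1 * x2 + - b2 * y2)),
         (1 * (a2 * x1 + a1 * y1) + 1 * (b2 * x2 + b1 * y2)).
  split; [|split].
  - eapply int01C_ext; [|exact (int01C_lin _ _ _ _ 1 1 (int01C_lin _ _ _ _ a1 (-a2) A1 B1) (int01C_lin _ _ _ _ b1 (-b2) A2 B2))].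
    intros s t. unfold hdelta; cunf; simpl. ring.
  - eapply int01C_ext; [|exact (int01C_lin _ _ _ _ 1 1 (int01C_lin _ _ _ _ a2 a1 A1 B1) (int01C_lin _ _ _ _ b2 b1 A2 B2))].
    intros s t. unfold hdelta; cunf; simpl. ring.
  - cunf; simpl. f_equal; ring.
Qed.

Lemma IP_zero u v g : inner_on u v (fun _ => C0) g C0.
Proof.
  rewrite inner_C; simpl. exists 0, 0. split; [|split].
  - eapply int01C_ext; [|apply int01C_zero]. intros; unfold hdelta; cunf; simpl; ring.
  - eapply int01C_ext; [|apply int01C_zero]. intros; unfold hdelta; cunf; simpl; ring.
  - cunf; simpl; f_equal; ring.
Qed.

Lemma IP_add u v f1 f2 g c1 c2 : inner_on u v f1 g c1 -> inner_on u v f2 g c2 ->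
  inner_on u v (fun y => Cadd (f1 y) (f2 y)) g (Cadd c1 c2).
Proof.
  intros A B. generalize (IP_lin _ _ _ _ _ _ _ C1 C1 A B). intros H.
  rewrite !Cmul_1l in H. eapply IP_ext; [| |exact H]; intros; cbv beta; rewrite ?Cmul_1l; auto.
Qed.

Lemma IP_cmul u v f g c a : inner_on u v f g c ->
  inner_on u v (fun y => Cmul a (f y)) g (Cmul a c).
Proof.
  intros A. generalize (IP_lin _ _ _ _ _ _ _ a C0 A A). intros H.
  rewrite Cmul_0l, Cadd_0r in H. eapply IP_ext; [| |exact H]; intros; cbv beta; rewrite ?Cmul_0l, ?Cadd_0r; auto.
Qed.

Lemma IP_sub u v f1 f2 g c1 c2 : inner_on u v f1 g c1 -> inner_on u v f2 g c2 ->
  inner_on u v (fun y => Csub (f1 y) (f2 y)) g (Csub c1 c2).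
Proof.
  intros A B. generalize (IP_lin _ _ _ _ _ _ _ C1 (Copp C1) A B). intros H.
  replace (Csub c1 c2) with (Cadd (Cmul C1 c1) (Cmul (Copp C1) c2)) by ceq.
  eapply IP_ext; [| |exact H]; intros; auto. cbv beta. cunf; simpl; f_equal; ring.
Qed.

Lemma IP_Slin u v c f g val n : (forall i, (0 <= i < Z.of_nat n)%Z -> inner_on u v (f i) g (val i)) ->
  inner_on u v (Slin c f n) g (Csum (fun i => Cmul (c i) (val i)) n).
Proof.
  induction n; intros H.
  - unfold Slin; simpl. apply IP_zero.
  - unfold Slin in *; simpl. apply IP_add. apply IHn. intros; apply H; lia.
    apply IP_cmul, H; lia.
Qed.

Definition negE (y : E) : E := (- fst y, - snd y).
Definition Par (f : Sec) : Sec := fun y => f (negE y).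

Lemma Cnorm_Cmod z : Cnorm z = Cmod z.
Proof. unfold Cnorm, Cmod. f_equal. simpl. ring. Qed.
Lemma Cnorm_add z w : Cnorm (Cadd z w) <= Cnorm z + Cnorm w.
Proof. rewrite !Cnorm_Cmod. apply Cmod_triangle. Qed.
Lemma Cnorm_mul z w : Cnorm (Cmul z w) = Cnorm z * Cnorm w.
Proof. rewrite !Cnorm_Cmod. apply Cmod_mult. Qed.
Lemma Cnorm_ge0 z : 0 <= Cnorm z.
Proof. unfold Cnorm. apply sqrt_pos. Qed.
Lemma Cnorm_scal r z : Cnorm (Cscal r z) = Rabs r * Cnorm z.
Proof.
  replace (Cscal r z) with (Cmul (RtoC r) z) by ceq. rewrite Cnorm_mul. f_equal.
  unfold Cnorm, RtoC; simpl. replace (r * r + 0 * 0) with (r * r) by ring. apply sqrt_Rsqr_abs.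
Qed.
Lemma Cnorm_opp z : Cnorm (Copp z) = Cnorm z.
Proof. unfold Cnorm, Copp; simpl. f_equal; ring. Qed.
Lemma Cnorm_eq0 z : Cnorm z = 0 -> z = C0.
Proof.
  rewrite Cnorm_Cmod. intros H. apply Cmod_eq_0 in H. rewrite H. reflexivity.
Qed.

Lemma diff_at_add f g p dx dy ex ey : diff_at f p dx dy -> diff_at g p ex ey ->
  diff_at (fun y => Cadd (f y) (g y)) p (Cadd dx ex) (Cadd dy ey).
Proof.
  intros Hf Hg eps Heps.
  destruct (Hf (eps/2)) as [d1 [Hd1 H1]]; [lra|].
  destruct (Hg (eps/2)) as [d2 [Hd2 H2]]; [lra|].
  exists (Rmin d1 d2). split. apply Rmin_pos; auto.
  intros h1 h2 Hh.
  assert (A1 : h1 * h1 + h2 * h2 < d1 * d1).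
  { apply Rlt_le_trans with (Rmin d1 d2 * Rmin d1 d2); auto.
    assert (0 < Rmin d1 d2) by (apply Rmin_pos; auto). generalize (Rmin_l d1 d2); intros; nra. }
  assert (A2 : h1 * h1 + h2 * h2 < d2 * d2).
  { apply Rlt_le_trans with (Rmin d1 d2 * Rmin d1 d2); auto.
    assert (0 < Rmin d1 d2) by (apply Rmin_pos; auto). generalize (Rmin_r d1 d2); intros; nra. }
  specialize (H1 _ _ A1). specialize (H2 _ _ A2).
  match goal with |- Cnorm ?X <= _ => replace X with
    (Cadd (Csub (Csub (f (fst p + h1, snd p + h2)) (f p)) (Cadd (Cscal h1 dx) (Cscal h2 dy)))
          (Csub (Csub (g (fst p + h1, snd p + h2)) (g p)) (Cadd (Cscal h1 ex) (Cscal h2 ey)))) by ceq end.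
  eapply Rle_trans. apply Cnorm_add. lra.
Qed.

Lemma diff_at_cmul f p dx dy a : diff_at f p dx dy ->
  diff_at (fun y => Cmul a (f y)) p (Cmul a dx) (Cmul a dy).
Proof.
  intros Hf eps Heps.
  assert (Ha : 0 < Cnorm a + 1) by (generalize (Cnorm_ge0 a); lra).
  destruct (Hf (eps / (Cnorm a + 1))) as [d [Hd H]]. apply Rdiv_lt_0_compat; auto.
  exists d; split; auto. intros h1 h2 Hh. specialize (H _ _ Hh).
  match goal with |- Cnorm ?X <= _ => replace X with
    (Cmul a (Csub (Csub (f (fst p + h1, snd p + h2)) (f p)) (Cadd (Cscal h1 dx) (Cscal h2 dy)))) by ceq end.
  rewrite Cnorm_mul.
  set (N := Cnorm _) in *. set (S := sqrt _) in *.
  assert (0 <= N) by apply Cnorm_ge0. assert (0 <= S) by apply sqrt_pos.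
  assert (0 <= Cnorm a) by apply Cnorm_ge0.
  apply Rle_trans with (Cnorm a * (eps / (Cnorm a + 1) * S)). apply Rmult_le_compat_l; auto.
  unfold Rdiv. replace (Cnorm a * (eps * / (Cnorm a + 1) * S)) with (eps * S * (Cnorm a / (Cnorm a + 1))) by (field; lra).
  assert (Cnorm a / (Cnorm a + 1) <= 1). { apply Rmult_le_reg_r with (Cnorm a + 1); auto. unfold Rdiv; rewrite Rmult_assoc, Rinv_l; lra. }
  assert (0 <= eps * S) by nra. nra.
Qed.

Lemma diff_at_Par f p dx dy : diff_at f (negE p) dx dy -> diff_at (Par f) p (Copp dx) (Copp dy).
Proof.
  intros Hf eps Heps. destruct (Hf eps Heps) as [d [Hd H]]. exists d; split; auto.
  intros h1 h2 Hh. specialize (H (-h1) (-h2)). unfold Par.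
  replace (negE (fst p + h1, snd p + h2)) with (fst (negE p) + - h1, snd (negE p) + - h2)
    by (unfold negE; simpl; f_equal; ring).
  replace (sqrt (h1 * h1 + h2 * h2)) with (sqrt (- h1 * - h1 + - h2 * - h2)) by (f_equal; ring).
  match goal with |- Cnorm ?X <= _ => replace X with
    (Csub (Csub (f (fst (negE p) + - h1, snd (negE p) + - h2)) (f (negE p))) (Cadd (Cscal (-h1) dx) (Cscal (-h2) dy))) by ceq end.
  apply H. lra.
Qed.

Lemma diff_at_zero p : diff_at (fun _ => C0) p C0 C0.
Proof.
  intros eps Heps. exists 1; split; [lra|]. intros h1 h2 _.
  replace (Csub (Csub C0 C0) (Cadd (Cscal h1 C0) (Cscal h2 C0))) with C0 by ceq.
  unfold Cnorm, C0; simpl. replace (0 * 0 + 0 * 0) with 0 by ring. rewrite sqrt_0.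
  apply Rmult_le_pos; [lra| apply sqrt_pos].
Qed.

Lemma diff_at_ext f g p dx dy : (forall y, f y = g y) -> diff_at f p dx dy -> diff_at g p dx dy.
Proof. intros E H eps He. destruct (H eps He) as [d [Hd H']]. exists d; split; auto. intros. rewrite <- !E. auto. Qed.

Lemma holo_ext k f g : (forall y, f y = g y) -> holo k f -> holo k g.
Proof.
  intros E H p. destruct (H p) as [dx [dy [D Q]]]. exists dx, dy. split.
  eapply diff_at_ext; eauto. rewrite <- E; auto.
Qed.

Lemma holo_add k f g : holo k f -> holo k g -> holo k (fun y => Cadd (f y) (g y)).
Proof.
  intros Hf Hg p. destruct (Hf p) as [dx [dy [D Q]]]. destruct (Hg p) as [ex [ey [D' Q']]].
  exists (Cadd dx ex), (Cadd dy ey). split. apply diff_at_add; auto.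
  revert Q Q'. generalize (f p) (g p) (dz p). intros. cdes. unfold C0 in *. cunf. simpl in *.
  injection Q; injection Q'; intros. f_equal; nra.
Qed.

Lemma holo_cmul k f a : holo k f -> holo k (fun y => Cmul a (f y)).
Proof.
  intros Hf p. destruct (Hf p) as [dx [dy [D Q]]].
  exists (Cmul a dx), (Cmul a dy). split. apply diff_at_cmul; auto.
  revert Q. generalize (f p) (dz p). intros. cdes. unfold C0 in *. cunf. simpl in *.
  injection Q; intros. f_equal; nra.
Qed.

Lemma holo_zero k : holo k (fun _ => C0).
Proof. intros p. exists C0, C0. split. apply diff_at_zero. ceq. Qed.

Lemma holo_Par k f : holo k f -> holo k (Par f).
Proof.
  intros Hf p. destruct (Hf (negE p)) as [dx [dy [D Q]]].
  exists (Copp dx), (Copp dy). split. apply diff_at_Par; auto.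
  unfold Par. revert Q. unfold dz, negE. simpl. generalize (f (- fst p, - snd p)). intros. cdes. unfold C0 in *. cunf. simpl in *.
  injection Q; intros. f_equal; nra.
Qed.

Lemma holo_Slin k c f n : (forall i, holo k (f i)) -> holo k (Slin c f n).
Proof.
  intros H. induction n; unfold Slin; simpl.
  - apply holo_zero.
  - apply holo_add. apply IHn. apply holo_cmul, H.
Qed.

Lemma Tstar_ext k x f g y : (forall z, f z = g z) -> Tstar k x f y = Tstar k x g y.
Proof. intros E; unfold Tstar; rewrite E; auto. Qed.

Lemma Tstar_Par k x f y : Tstar k x (Par f) y = Tstar k (negE x) f (negE y).
Proof.
  unfold Tstar, Par, negE, omega, Eadd; simpl. f_equal. f_equal. ring. f_equal; f_equal; ring.
Qed.

Lemma cis_opp_mul a : Cmul (cis (- a)) (cis a) = C1.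
Proof. rewrite <- cis_add. replace (-a + a) with 0 by ring. apply cis_0. Qed.

Lemma Tstar_inv k x f y : Tstar k (negE x) (Tstar k x f) y = f y.
Proof.
  unfold Tstar, negE, Eadd, omega; simpl.
  replace (fst x + (- fst x + fst y), snd x + (- snd x + snd y)) with y by (destruct y; simpl; f_equal; ring).
  rewrite <- Cmul_assoc, <- cis_add.
  replace (- (INR k / 2) * (- fst x * snd y - - snd x * fst y) +
     - (INR k / 2) * (fst x * (- snd x + snd y) - snd x * (- fst x + fst y))) with 0 by ring.
  rewrite cis_0. apply Cmul_1l.
Qed.

Lemma Tstar_Slin k x c f n y : Tstar k x (Slin c f n) y = Slin c (fun i => Tstar k x (f i)) n y.
Proof.
  unfold Slin, Tstar. rewrite <- Csum_cmul. apply Csum_ext. intros. ceq.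
Qed.

Lemma negE_lattice (m n : Z) u v : negE (Eadd (Escal (IZR m) u) (Escal (IZR n) v)) =
  Eadd (Escal (IZR (- m)) u) (Escal (IZR (- n)) v).
Proof. unfold negE, Eadd, Escal; simpl. rewrite !opp_IZR. f_equal; ring. Qed.

Lemma negE_negE y : negE (negE y) = y.
Proof. destruct y; unfold negE; simpl; f_equal; ring. Qed.

Lemma in_H_Par k u v f : in_H k u v f -> in_H k u v (Par f).
Proof.
  intros [Hh Hi]. split. apply holo_Par; auto.
  intros m n y. rewrite Tstar_Par, negE_lattice. unfold Par. apply Hi.
Qed.

Lemma in_H_Slin k u v c f n : (forall i, in_H k u v (f i)) -> in_H k u v (Slin c f n).
Proof.
  intros H. split. apply holo_Slin; intros; apply H.
  intros m n' y. rewrite Tstar_Slin. unfold Slin. apply Csum_ext. intros. f_equal. apply H.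
Qed.

Lemma Cmul_eq0 z w : Cmul z w = C0 -> w <> C0 -> z = C0.
Proof.
  destruct z as [z1 z2], w as [w1 w2]. unfold Cmul, C0; simpl. intros H Hw. injection H; intros H1 H2.
  assert (P : w1 * w1 + w2 * w2 <> 0).
  { intros P. apply Hw. assert (A1 : 0 <= w1 * w1) by nra. assert (A2 : 0 <= w2 * w2) by nra.
    assert (B1 : w1 * w1 = 0) by lra. assert (B2 : w2 * w2 = 0) by lra.
    apply Rmult_integral in B1, B2. destruct B1, B2; subst; auto. }
  assert (E1 : z1 * (w1 * w1 + w2 * w2) = w1 * (z1 * w1 - z2 * w2) + w2 * (z1 * w2 + z2 * w1)) by ring.
  assert (E2 : z2 * (w1 * w1 + w2 * w2) = w1 * (z1 * w2 + z2 * w1) - w2 * (z1 * w1 - z2 * w2)) by ring.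
  rewrite H1, H2 in E1, E2. rewrite !Rmult_0_r in E1, E2. replace (0 + 0) with 0 in E1 by ring. replace (0 - 0) with 0 in E2 by ring.
  apply Rmult_integral in E1, E2. destruct E1; [|contradiction]. destruct E2; [|contradiction]. subst; auto.
Qed.

Lemma cis_ne1 x : 0 < x < 2 * PI -> cis x <> C1.
Proof.
  intros Hx E. unfold cis, C1 in E. injection E; intros Hs Hc.
  destruct (sin_eq_0_0 _ Hs) as [z ->].
  assert (0 < IZR z < 2) by (generalize PI_RGT_0; intros; split; nra).
  assert (z = 1%Z) by (destruct H; apply lt_IZR in H; apply lt_IZR in H0; lia). subst.
  rewrite Rmult_1_l, cos_PI in Hc. lra.
Qed.

Lemma kron_sum (a : Z -> Cplx) n j : (0 <= j < Z.of_nat n)%Z ->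
  Csum (fun i => Cmul (a i) (kron (Z.eqb i j))) n = a j.
Proof.
  intros Hj. rewrite (Csum_single _ _ j Hj).
  - rewrite Z.eqb_refl. apply Cmul_1r.
  - intros i _ Hi. apply Z.eqb_neq in Hi. rewrite Hi. apply Cmul_0r.
Qed.

Definition ONB (k : nat) (u v : E) (b : Z -> Sec) (N : nat) : Prop :=
  (forall i j, (0 <= i < Z.of_nat N)%Z -> (0 <= j < Z.of_nat N)%Z ->
     inner_on u v (b i) (b j) (kron (Z.eqb i j))) /\
  (forall f, in_H k u v f -> exists c, forall y, f y = Slin c b N y).

Lemma coef_extract k u v b N c j : ONB k u v b N -> (0 <= j < Z.of_nat N)%Z ->
  inner_on u v (Slin c b N) (b j) (c j).
Proof.
  intros [O _] Hj. rewrite <- (kron_sum c N j Hj). apply IP_Slin. intros; apply O; auto.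
Qed.

Lemma Slin_zero_coef k u v b N c : ONB k u v b N -> (forall y, Slin c b N y = C0) ->
  forall j, (0 <= j < Z.of_nat N)%Z -> c j = C0.
Proof.
  intros HB H j Hj. eapply IP_uniq. apply (coef_extract k u v b N c j HB Hj).
  eapply IP_ext; [| |apply IP_zero]; intros; auto.
Qed.

Lemma eigen_unique k u v b N x (theta : Z -> R) f :
  ONB k u v b N ->
  (forall i y, Tstar k x (b i) y = Cmul (cis (theta i)) (b i y)) ->
  (forall i, (0 < i < Z.of_nat N)%Z -> cis (theta i) <> C1) ->
  (0 < N)%nat ->
  in_H k u v f -> (forall y, Tstar k x f y = f y) ->
  exists c0, forall y, f y = Cmul c0 (b 0%Z y).
Proof.
  intros HB Hev Hne HN Hf Hfix. destruct HB as [HO HE]. destruct (HE f Hf) as [c Hc].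
  assert (Z0 : forall y, Slin (fun i => Cmul (c i) (Csub (cis (theta i)) C1)) b N y = C0).
  { intros y. generalize (Hfix y). rewrite (Tstar_ext _ _ _ _ _ Hc), Tstar_Slin, Hc. unfold Slin.
    intros E. transitivity (Csub (Csum (fun i => Cmul (c i) (Tstar k x (b i) y)) N)
                                  (Csum (fun i => Cmul (c i) (b i y)) N)).
    - unfold Csub at 2. rewrite <- Csum_opp, <- Csum_add. apply Csum_ext. intros. rewrite Hev. ceq.
    - rewrite E. ceq. }
  assert (Hc0 : forall j, (0 < j < Z.of_nat N)%Z -> c j = C0).
  { intros j Hj. assert (Hj' : (0 <= j < Z.of_nat N)%Z) by lia.
    generalize (Slin_zero_coef k u v b N _ (conj HO HE) Z0 j Hj'). intros H.
    apply Cmul_eq0 in H; auto. intros H'. apply (Hne j Hj). destruct (cis (theta j)).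
    unfold Csub, Cadd, Copp, C0, C1 in *; simpl in *. injection H'; intros. f_equal; lra. }
  exists (c 0%Z). intros y. rewrite Hc. unfold Slin. apply (Csum_single (fun i => Cmul (c i) (b i y)) N 0%Z). lia.
  intros i Hi Hi0. rewrite Hc0 by lia. apply Cmul_0l.
Qed.

Lemma par_base k u v b N x (theta : Z -> R) :
  ONB k u v b N ->
  (forall i, in_H k u v (b i)) ->
  (forall i y, Tstar k x (b i) y = Cmul (cis (theta i)) (b i y)) ->
  theta 0%Z = 0 ->
  (forall i, (0 < i < Z.of_nat N)%Z -> cis (theta i) <> C1) ->
  (0 < N)%nat -> b 0%Z (0, 0) <> C0 ->
  forall y, b 0%Z (negE y) = b 0%Z y.
Proof.
  intros HB HH Hev Ht0 Hne HN Hb0.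
  assert (Fix0 : forall y, Tstar k x (b 0%Z) y = b 0%Z y).
  { intros; rewrite Hev, Ht0, cis_0; apply Cmul_1l. }
  destruct (eigen_unique k u v b N x theta (Par (b 0%Z)) HB Hev Hne HN) as [c0 Hc0].
  - apply in_H_Par; auto.
  - intros y. rewrite Tstar_Par. unfold Par.
    rewrite <- (Tstar_inv k x (b 0%Z) (negE y)).
    apply Tstar_ext. intros; symmetry; apply Fix0.
  - assert (E : c0 = C1).
    { generalize (Hc0 (0,0)). unfold Par, negE; simpl. rewrite Ropp_0. intros E.
      assert (Cmul (Csub c0 C1) (b 0%Z (0,0)) = C0).
      { transitivity (Csub (Cmul c0 (b 0%Z (0,0))) (b 0%Z (0,0))). ceq. rewrite <- E. ceq. }
      apply Cmul_eq0 in H; auto. destruct c0. unfold Csub, Cadd, Copp, C0, C1 in *; simpl in *.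
      injection H; intros. f_equal; lra. }
    subst. intros y. generalize (Hc0 y). unfold Par. rewrite Cmul_1l. auto.
Qed.

Lemma par_all k b w (delta : Z) :
  (delta = 1 \/ delta = -1)%Z ->
  (forall i y, Tstar k w (b i) y = b (i + delta)%Z y) ->
  (forall y, b 0%Z (negE y) = b 0%Z y) ->
  forall i y, b i (negE y) = b (- i)%Z y.
Proof.
  intros Hd Hsh H0.
  assert (Step : forall i, (forall y, b i (negE y) = b (- i)%Z y) ->
                           (forall y, b (i + delta)%Z (negE y) = b (- (i + delta))%Z y)).
  { intros i Hi y. rewrite <- Hsh.
    transitivity (Tstar k (negE w) (Par (b i)) y).
    - rewrite Tstar_Par, negE_negE. auto.
    - transitivity (Tstar k (negE w) (Tstar k w (b (- (i + delta))%Z)) y).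
      + apply Tstar_ext. intros z. unfold Par. rewrite Hi, Hsh. f_equal. lia.
      + apply Tstar_inv. }
  assert (Sym : forall i, (forall y, b i (negE y) = b (- i)%Z y) -> (forall y, b (- i)%Z (negE y) = b (- - i)%Z y)).
  { intros i Hi y. rewrite Z.opp_involutive. rewrite <- Hi, negE_negE. auto. }
  assert (Nat : forall n : nat, forall y, b (Z.of_nat n * delta)%Z (negE y) = b (- (Z.of_nat n * delta))%Z y).
  { induction n. simpl. intros; rewrite H0; auto.
    intros y. replace (Z.of_nat (S n) * delta)%Z with (Z.of_nat n * delta + delta)%Z by lia.
    apply Step. auto. }
  intros i. destruct (Z_le_gt_dec 0 (i * delta)) as [H|H].
  - replace i with (Z.of_nat (Z.to_nat (i * delta)) * delta)%Z by (destruct Hd; subst; lia). apply Nat.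
  - replace i with (- (Z.of_nat (Z.to_nat (- (i * delta))) * delta))%Z by (destruct Hd; subst; lia).
    apply Sym, Nat.
Qed.

Module NT.
Local Open Scope Z_scope.

Lemma split_fact (A B : Z) : rel_prime A B -> forall m : nat, forall n, 1 <= n <= Z.of_nat m ->
  exists g h, n = g * h /\ 1 <= g /\ 1 <= h /\ rel_prime h A /\ rel_prime g B /\ rel_prime g h.
Proof.
  intros HAB m. induction m; intros n Hn. lia.
  destruct (Z.eq_dec (Z.gcd n A) 1) as [E|E].
  - exists 1, n. split; [lia|split; [lia|split; [lia|split; [|split]]]].
    apply Zgcd_1_rel_prime; auto. apply rel_prime_1. apply rel_prime_1.
  - set (p := Z.gcd n A) in *.
    assert (Hp0 : 0 <= p) by apply Z.gcd_nonneg.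
    destruct (Z.gcd_divide_l n A) as [n1 Hn1]. fold p in Hn1.
    assert (Hp : 1 < p) by (destruct (Z.eq_dec p 0); [rewrite e in Hn1; lia| lia]).
    assert (Hn1b : 1 <= n1 <= Z.of_nat m) by nia.
    destruct (IHm n1 Hn1b) as [g1 [h1 [E1 [G1 [H1 [R1 [R2 R3]]]]]]].
    assert (pA : (p | A)) by apply Z.gcd_divide_r.
    exists (p * g1), h1. split; [nia|split; [nia|split; [lia|split; [auto|split]]]].
    + apply rel_prime_sym, rel_prime_mult; apply rel_prime_sym; auto.
      apply (rel_prime_div A B p); auto.
    + apply rel_prime_sym, rel_prime_mult; apply rel_prime_sym; auto.
      apply (rel_prime_div A h1 p); auto. apply rel_prime_sym; auto.
Qed.

Lemma bez (a b : Z) : rel_prime a b -> exists x y, x * a + y * b = 1.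
Proof. intros H. destruct (rel_prime_bezout _ _ H) as [x y E]. exists x, y; auto. Qed.

Definition e1 (A B s : Z) := A * B * s * s - 2 * (A + B) * s + 2.
Definition e2 (A B s : Z) := A * B * s * s - 2 * (A - B) * s - 2.

Lemma affine_sub (A B k : Z) : 1 <= A -> 1 <= B -> 1 <= k -> rel_prime A B ->
  exists u d, (exists w, u * u - 1 = 2 * k * w) /\ (exists w, u = 2 * w + 1) /\
    forall s, exists q, e2 A B (u * s + 2 * d) - e1 A B s = 4 * k * q.
Proof.
  intros HA HB Hk HAB.
  destruct (split_fact A B HAB (Z.to_nat k) k ltac:(lia)) as [g [h [Ek [Hg [Hh [RhA [RgB Rgh]]]]]]].
  destruct (bez g h Rgh) as [x [y Bxy]].
  destruct (bez A h (rel_prime_sym _ _ RhA)) as [a' [h2 Ba]].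
  destruct (bez B g (rel_prime_sym _ _ RgB)) as [b' [g2 Bb]].
  set (u := 2 * x * g - 1). set (d := b' * y * h - a' * x * g).
  assert (Hu1 : u + 1 = 2 * x * g) by (subst u; ring).
  assert (Hu2 : u - 1 = - 2 * y * h) by (subst u; lia).
  exists u, d. split; [|split].
  - exists (- 2 * x * y). replace (u * u - 1) with ((u + 1) * (u - 1)) by ring.
    rewrite Hu1, Hu2, Ek. ring.
  - exists (x * g - 1). subst u; ring.
  - intros s.
    set (E' := A * b' * y + y + h2 * x * g).
    set (F' := - x - g2 * y * h - B * a' * x).
    assert (He : A * d + 1 = h * E').
    { subst d E'. assert (Z1 : a' * A + h2 * h - 1 = 0) by lia. assert (Z2 : x * g + y * h - 1 = 0) by lia.
      match goal with |- ?L = ?R => replace L with (R + (a' * A + h2 * h - 1) * (- x * g) + (x * g + y * h - 1) * (-1)) by ring end.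
      rewrite Z1, Z2; ring. }
    assert (Hf : B * d - 1 = g * F').
    { subst d F'. assert (Z1 : b' * B + g2 * g - 1 = 0) by lia. assert (Z2 : x * g + y * h - 1 = 0) by lia.
      match goal with |- ?L = ?R => replace L with (R + (b' * B + g2 * g - 1) * (y * h) + (x * g + y * h - 1) * 1) by ring end.
      rewrite Z1, Z2; ring. }
    exists (A * B * (- x * y) * s * s + (x * B * E' - y * A * F') * s + E' * F').
    assert (ID : e2 A B (u * s + 2 * d) - e1 A B s =
       A * B * ((u + 1) * (u - 1)) * s * s + 2 * ((u + 1) * B * (A * d + 1) + (u - 1) * A * (B * d - 1)) * s
       + 4 * (A * d + 1) * (B * d - 1)).
    { unfold e1, e2. ring. }
    rewrite ID, He, Hf, Hu1, Hu2, Ek. ring.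
Qed.

End NT.
Import NT.

Lemma tpow_add k m1 m2 : tpow k (m1 + m2) = Cmul (tpow k m1) (tpow k m2).
Proof. unfold tpow. rewrite <- cis_add, plus_IZR. f_equal. ring. Qed.

Lemma tpow_cong k m1 m2 q : (1 <= k)%nat -> (m1 = m2 + 4 * Z.of_nat k * q)%Z -> tpow k m1 = tpow k m2.
Proof.
  intros Hk ->. unfold tpow. rewrite plus_IZR, !mult_IZR, <- INR_IZR_INZ.
  assert (INR k <> 0) by (apply not_0_INR; lia).
  replace (PI * (1 + / (2 * INR k)) * (IZR m2 + 4 * INR k * IZR q)) with
     (PI * (1 + / (2 * INR k)) * IZR m2 + 2 * PI * IZR ((2 * Z.of_nat k + 1) * q)).
  apply cis_2piZ. rewrite mult_IZR, plus_IZR, mult_IZR, <- INR_IZR_INZ. field; auto.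
Qed.

Definition Gs (A B : Z) (k : nat) (s : Z) : Cplx :=
  Cmul (tpow k (A * B * s * s)%Z) (Csub (tpow k (- 2 * (A + B) * s + 2)%Z) (tpow k (- 2 * (A - B) * s - 2)%Z)).

Lemma Gs_e A B k s : Gs A B k s = Csub (tpow k (e1 A B s)) (tpow k (e2 A B s)).
Proof.
  unfold Gs. replace (e1 A B s) with (A * B * s * s + (- 2 * (A + B) * s + 2))%Z by (unfold e1; ring).
  replace (e2 A B s) with (A * B * s * s + (- 2 * (A - B) * s - 2))%Z by (unfold e2; ring).
  rewrite !tpow_add. ceq.
Qed.

Lemma e1_per A B s m : (e1 A B (s + 2 * m) = e1 A B s + 4 * (A * B * s * m + A * B * m * m - (A + B) * m))%Z.
Proof. unfold e1; ring. Qed.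
Lemma e2_per A B s m : (e2 A B (s + 2 * m) = e2 A B s + 4 * (A * B * s * m + A * B * m * m - (A - B) * m))%Z.
Proof. unfold e2; ring. Qed.

Lemma Gs_per A B k s q : (1 <= k)%nat -> Gs A B k (s + 2 * Z.of_nat k * q) = Gs A B k s.
Proof.
  intros Hk. rewrite !Gs_e. f_equal.
  - apply tpow_cong with (q := (A * B * s * q + A * B * (Z.of_nat k * q) * q - (A + B) * q)%Z); auto.
    replace (s + 2 * Z.of_nat k * q)%Z with (s + 2 * (Z.of_nat k * q))%Z by ring. rewrite e1_per. ring.
  - apply tpow_cong with (q := (A * B * s * q + A * B * (Z.of_nat k * q) * q - (A - B) * q)%Z); auto.
    replace (s + 2 * Z.of_nat k * q)%Z with (s + 2 * (Z.of_nat k * q))%Z by ring. rewrite e2_per. ring.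
Qed.

Lemma full_sum A B k p0 : (1 <= A)%Z -> (1 <= B)%Z -> (1 <= k)%nat -> rel_prime A B ->
  Csum (fun j => Gs A B k (p0 + 2 * j)) (2 * k) = C0.
Proof.
  intros HA HB Hk HAB.
  destruct (affine_sub A B (Z.of_nat k) HA HB ltac:(lia) HAB) as [u [d [[w1 Hw1] [[w Hw] Hq]]]].
  set (K2 := (2 * Z.of_nat k)%Z).
  set (al := (w * p0 + d)%Z).
  set (sg := fun j => ((al + u * j) mod K2)%Z).
  assert (HK2 : (0 < K2)%Z) by (unfold K2; lia).
  assert (E2 : Csum (fun j => tpow k (e2 A B (p0 + 2 * sg j))) (2 * k) = Csum (fun j => tpow k (e2 A B (p0 + 2 * j))) (2 * k)).
  { apply (Csum_perm (fun j => tpow k (e2 A B (p0 + 2 * j))) sg).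
    - intros i _. unfold sg. rewrite Nat2Z.inj_mul. apply Z.mod_pos_bound. lia.
    - intros i j Hi Hj E. unfold sg in E. rewrite Nat2Z.inj_mul in Hi, Hj.
      rewrite !Z.mod_eq in E by lia.
      set (qi := ((al + u * i) / K2)%Z) in *. set (qj := ((al + u * j) / K2)%Z) in *.
      assert (E' : (u * (i - j) = K2 * (qi - qj))%Z) by (rewrite Z.mul_sub_distr_l, Z.mul_sub_distr_l; lia).
      set (t := (qi - qj)%Z) in *.
      assert (E'' : (i - j = K2 * (u * t - w1 * (i - j)))%Z).
      { transitivity (u * (u * (i - j)) - (u * u - 1) * (i - j))%Z. ring.
        rewrite E', Hw1. unfold K2. ring. }
      set (M := (u * t - w1 * (i - j))%Z) in *.
      destruct (Z_lt_le_dec M 0); [|destruct (Z_lt_le_dec 0 M)]; nia. }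
  assert (E3 : forall j, tpow k (e2 A B (p0 + 2 * sg j)) = tpow k (e1 A B (p0 + 2 * j))).
  { intros j. destruct (Hq (p0 + 2 * j)%Z) as [q Hqq].
    set (m := ((al + u * j) / K2)%Z).
    assert (Hs : (p0 + 2 * sg j = (u * (p0 + 2 * j) + 2 * d) + 2 * (- (2 * Z.of_nat k * m)))%Z).
    { unfold sg. rewrite (Z.mod_eq (al + u * j) K2) by lia. fold m. unfold al, K2. rewrite Hw. ring. }
    rewrite Hs, e2_per.
    apply tpow_cong with (q := (q + A * B * (u * (p0 + 2 * j) + 2 * d) * (-2 * m) +
       A * B * Z.of_nat k * 4 * m * m + (A - B) * 2 * m)%Z).
    auto. replace (e2 A B (u * (p0 + 2 * j) + 2 * d)) with (e1 A B (p0 + 2 * j) + 4 * Z.of_nat k * q)%Z by lia. ring. }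
  assert (E4 : Csum (fun j => tpow k (e1 A B (p0 + 2 * j))) (2 * k) = Csum (fun j => tpow k (e2 A B (p0 + 2 * j))) (2 * k)).
  { rewrite <- E2. apply Csum_ext. intros; symmetry; apply E3. }
  transitivity (Csum (fun j => Csub (tpow k (e1 A B (p0 + 2 * j))) (tpow k (e2 A B (p0 + 2 * j)))) (2 * k)).
  apply Csum_ext; intros; apply Gs_e.
  unfold Csub. rewrite Csum_add, Csum_opp, E4. generalize (Csum (fun j => tpow k (e2 A B (p0 + 2 * j))) (2 * k)). intros; ceq.
Qed.

Lemma Jval_S a b k n : Jval a b k (S n) =
  Cdiv (Cmul (tpow k (Z.of_nat a * Z.of_nat b * (1 - Z.of_nat (S n) * Z.of_nat (S n)))%Z)
             (Csum (fun j => Gs (Z.of_nat a) (Z.of_nat b) k (2 * j - (Z.of_nat (S n) - 1))%Z) (S n)))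
       (Csub (tpow k 2%Z) (tpow k (-2)%Z)).
Proof. reflexivity. Qed.

Lemma nat_rel_prime a b : (0 < a)%nat -> Nat.gcd a b = 1%nat -> rel_prime (Z.of_nat a) (Z.of_nat b).
Proof.
  intros Ha Hg. destruct (Nat.gcd_bezout_pos a b Ha) as [u [v Huv]]. rewrite Hg in Huv.
  apply bezout_rel_prime. apply (Bezout_intro _ _ _ (Z.of_nat u) (- Z.of_nat v)). lia.
Qed.

Lemma Jval_refl a b k l l' : (0 < a)%nat -> (0 < b)%nat -> Nat.gcd a b = 1%nat -> (1 <= k)%nat ->
  (1 <= l)%nat -> (1 <= l')%nat -> (l + l' = 2 * k)%nat -> Jval a b k l' = Copp (Jval a b k l).
Proof.
  intros Ha Hb Hg Hk Hl Hl' Hs.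
  assert (HAB : rel_prime (Z.of_nat a) (Z.of_nat b)).
  { apply nat_rel_prime; auto. }
  destruct l as [|n]; [lia|]. destruct l' as [|n']; [lia|].
  rewrite !Jval_S.
  set (A := Z.of_nat a). set (B := Z.of_nat b). set (L := Z.of_nat (S n)). set (L' := Z.of_nat (S n')).
  assert (EL : (L' = 2 * Z.of_nat k - L)%Z) by (unfold L, L'; lia).
  assert (P : tpow k (A * B * (1 - L' * L'))%Z = tpow k (A * B * (1 - L * L))%Z).
  { apply tpow_cong with (q := (A * B * (L - Z.of_nat k))%Z); auto. rewrite EL. ring. }
  rewrite P.
  assert (S0 : Csum (fun j => Gs A B k (2 * j - (L - 1))%Z) (S n + S n') = C0).
  { rewrite Hs. rewrite <- (full_sum A B k (1 - L)); try lia; auto.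
    apply Csum_ext; intros; f_equal; ring. }
  rewrite Csum_split in S0.
  assert (S1 : Csum (fun j => Gs A B k (2 * j - (L' - 1))%Z) (S n') =
               Csum (fun i => Gs A B k (2 * (i + Z.of_nat (S n)) - (L - 1))%Z) (S n')).
  { apply Csum_ext. intros i _. rewrite <- (Gs_per A B k _ 1 Hk). f_equal. rewrite EL. unfold L. ring. }
  rewrite S1.
  assert (S2 : Csum (fun i => Gs A B k (2 * (i + Z.of_nat (S n)) - (L - 1))%Z) (S n') =
               Copp (Csum (fun j => Gs A B k (2 * j - (L - 1))%Z) (S n))).
  { revert S0. generalize (Csum (fun i => Gs A B k (2 * (i + Z.of_nat (S n)) - (L - 1))%Z) (S n')),
      (Csum (fun j => Gs A B k (2 * j - (L - 1))%Z) (S n)). intros X Y H. cdes. unfold Cadd, Copp, C0 in *.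
    simpl in *. injection H; intros. f_equal; lra. }
  rewrite S2. unfold Cdiv. generalize (Cinv (Csub (tpow k 2%Z) (tpow k (-2)%Z))). intros. ceq.
Qed.

Lemma mod_cong x y N : (0 < N)%Z -> (x mod N = y mod N)%Z -> exists q, (x = y + N * q)%Z.
Proof.
  intros HN E. exists (x / N - y / N)%Z.
  pose proof (Z.div_mod x N ltac:(lia)). pose proof (Z.div_mod y N ltac:(lia)).
  rewrite Z.mul_sub_distr_l. lia.
Qed.
Lemma cong_mod x y N q : (0 < N)%Z -> (x = y + N * q)%Z -> (x mod N = y mod N)%Z.
Proof. intros HN ->. rewrite Z.mul_comm. apply Z_mod_plus_full. Qed.
Lemma opp_mod_mod x N : (0 < N)%Z -> ((- (x mod N)) mod N = (- x) mod N)%Z.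
Proof.
  intros HN. apply cong_mod with (q := (x / N)%Z); auto. pose proof (Z.div_mod x N ltac:(lia)). lia.
Qed.
Lemma mod_small_id x N : (0 <= x < N)%Z -> (x mod N = x)%Z.
Proof. apply Z.mod_small. Qed.

Lemma per_sec (f : Z -> Sec) (N : Z) : (forall n y, f (n + N)%Z y = f n y) ->
  forall n q y, f (n + N * q)%Z y = f n y.
Proof.
  intros H n q. revert n. induction q using Z.peano_ind; intros n y.
  - rewrite Z.mul_0_r, Z.add_0_r; auto.
  - rewrite <- (IHq n y). replace (n + N * Z.succ q)%Z with (n + N * q + N)%Z by ring. apply H.
  - rewrite <- (IHq n y). rewrite <- (H (n + N * Z.pred q)%Z y). f_equal. rewrite Z.mul_pred_r. ring.
Qed.
Lemma per_mod (f : Z -> Sec) (N : Z) : (0 < N)%Z -> (forall n y, f (n + N)%Z y = f n y) ->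
  forall n y, f n y = f (n mod N)%Z y.
Proof.
  intros HN H n y. rewrite (Z.div_mod n N) at 1 by lia. rewrite Z.add_comm, per_sec; auto.
Qed.

Definition ew (D : nat) (x : Z) : Cplx := cis (2 * PI * IZR x / INR D).

Lemma ew_add D x y : ew D (x + y) = Cmul (ew D x) (ew D y).
Proof. unfold ew. rewrite <- cis_add, plus_IZR. f_equal. unfold Rdiv; ring. Qed.
Lemma ew_per D x q : (0 < D)%nat -> ew D (x + Z.of_nat D * q) = ew D x.
Proof.
  intros HD. unfold ew. rewrite plus_IZR, mult_IZR, <- INR_IZR_INZ.
  assert (INR D <> 0) by (apply not_0_INR; lia).
  replace (2 * PI * (IZR x + INR D * IZR q) / INR D) with (2 * PI * IZR x / INR D + 2 * PI * IZR q) by (field; auto).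
  apply cis_2piZ.
Qed.
Lemma ew_0 D : ew D 0 = C1.
Proof. unfold ew. replace (2 * PI * IZR 0 / INR D) with 0 by (simpl; unfold Rdiv; ring). apply cis_0. Qed.
Lemma ew_ne1 D x : (0 < D)%nat -> (- Z.of_nat D < x < Z.of_nat D)%Z -> x <> 0%Z -> ew D x <> C1.
Proof.
  intros HD Hx Hx0.
  assert (HDr : 0 < INR D) by (apply lt_0_INR; lia).
  destruct (Z_lt_le_dec 0 x).
  - unfold ew. apply cis_ne1. split.
    + apply Rdiv_lt_0_compat; auto. generalize PI_RGT_0; intros. apply Rmult_lt_0_compat. lra. apply IZR_lt; auto.
    + apply Rmult_lt_reg_r with (INR D); auto. unfold Rdiv. rewrite Rmult_assoc, Rinv_l by lra.
      rewrite INR_IZR_INZ. generalize PI_RGT_0; intros. assert (IZR x < IZR (Z.of_nat D)) by (apply IZR_lt; lia). nra.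
  - rewrite <- (ew_per D x 1 HD). unfold ew. apply cis_ne1. rewrite plus_IZR, mult_IZR, <- INR_IZR_INZ.
    assert (Hlow : IZR (- Z.of_nat D) < IZR x) by (apply IZR_lt; lia).
    rewrite opp_IZR, <- INR_IZR_INZ in Hlow. simpl (IZR 1). split.
    + apply Rdiv_lt_0_compat; auto. generalize PI_RGT_0; intros. apply Rmult_lt_0_compat. lra. lra.
    + apply Rmult_lt_reg_r with (INR D); auto. unfold Rdiv. rewrite Rmult_assoc, Rinv_l by lra.
      assert (IZR x < 0) by (apply IZR_lt; lia). generalize PI_RGT_0; intros. nra.
Qed.

Lemma Csum_shift1 g n : Csum (fun i => g (i + 1)%Z) n = Cadd (Csub (Csum g n) (g 0%Z)) (g (Z.of_nat n)).
Proof.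
  induction n. simpl. ceq.
  change (Csum (fun i => g (i+1)%Z) (Datatypes.S n)) with (Cadd (Csum (fun i => g (i+1)%Z) n) (g (Z.of_nat n + 1)%Z)).
  change (Csum g (Datatypes.S n)) with (Cadd (Csum g n) (g (Z.of_nat n))).
  rewrite IHn. replace (Z.of_nat n + 1)%Z with (Z.of_nat (Datatypes.S n)) by lia.
  generalize (Csum g n) (g 0%Z) (g (Z.of_nat n)) (g (Z.of_nat (Datatypes.S n))). intros. ceq.
Qed.

Lemma geom_sum D m0 x : (0 < D)%nat -> (- Z.of_nat D < x < Z.of_nat D)%Z -> x <> 0%Z ->
  Csum (fun i => ew D ((m0 + i) * x)) D = C0.
Proof.
  intros HD Hx Hx0. set (Ssum := Csum (fun i => ew D ((m0 + i) * x)) D).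
  assert (E : Cmul Ssum (ew D x) = Ssum).
  { unfold Ssum. rewrite Cmul_comm, <- Csum_cmul.
    transitivity (Csum (fun i => ew D ((m0 + (i + 1)) * x)) D).
    { apply Csum_ext; intros. rewrite <- ew_add. f_equal. ring. }
    rewrite (Csum_shift1 (fun i => ew D ((m0 + i) * x))).
    replace ((m0 + Z.of_nat D) * x)%Z with ((m0 + 0) * x + Z.of_nat D * x)%Z by ring.
    rewrite ew_per by auto. generalize (Csum (fun i => ew D ((m0 + i) * x)) D) (ew D ((m0 + 0) * x)). intros. ceq. }
  assert (E2 : Cmul Ssum (Csub (ew D x) C1) = C0).
  { transitivity (Csub (Cmul Ssum (ew D x)) Ssum). ceq. rewrite E. ceq. }
  apply Cmul_eq0 in E2; auto. intros H. apply (ew_ne1 D x HD Hx Hx0).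
  revert H. destruct (ew D x). unfold Csub, Cadd, Copp, C0, C1; simpl. intros H; injection H; intros. f_equal; lra.
Qed.

Lemma geom_sum0' D m0 n : Csum (fun i => ew D ((m0 + i) * 0)) n = RtoC (INR n).
Proof.
  induction n. simpl. ceq. simpl Csum. rewrite IHn. rewrite Z.mul_0_r, ew_0. rewrite S_INR. ceq.
Qed.
Lemma geom_sum0 D m0 : Csum (fun i => ew D ((m0 + i) * 0)) D = RtoC (INR D).
Proof. apply geom_sum0'. Qed.

Lemma dft_inv D (h : Z -> Cplx) m0 : (0 < D)%nat ->
  (forall i, (0 <= i < Z.of_nat D)%Z -> Csum (fun l => Cmul (h l) (ew D ((m0 + i) * l))) D = C0) ->
  forall j, (0 <= j < Z.of_nat D)%Z -> h j = C0.
Proof.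
  intros HD H j Hj.
  assert (E : Csum (fun i => Cmul (ew D (- ((m0 + i) * j))) (Csum (fun l => Cmul (h l) (ew D ((m0 + i) * l))) D)) D = C0).
  { apply Csum_zero. intros i Hi. rewrite H by auto. apply Cmul_0r. }
  assert (E' : Csum (fun i => Cmul (ew D (- ((m0 + i) * j))) (Csum (fun l => Cmul (h l) (ew D ((m0 + i) * l))) D)) D
     = Csum (fun l => Cmul (h l) (Csum (fun i => ew D ((m0 + i) * (l - j))) D)) D).
  { transitivity (Csum (fun i => Csum (fun l => Cmul (h l) (ew D ((m0 + i) * (l - j)))) D) D).
    - apply Csum_ext. intros i _. rewrite <- Csum_cmul. apply Csum_ext. intros l _.
      replace ((m0 + i) * (l - j))%Z with (- ((m0 + i) * j) + (m0 + i) * l)%Z by ring. rewrite ew_add. ceq.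
    - rewrite Csum_swap. apply Csum_ext. intros l _. rewrite Csum_cmul. reflexivity. }
  rewrite E' in E. rewrite (Csum_single _ _ j Hj) in E.
  - rewrite Z.sub_diag, geom_sum0 in E. revert E. destruct (h j). unfold RtoC, Cmul, C0; simpl.
    assert (INR D <> 0) by (apply not_0_INR; lia). intros E; injection E; intros E1 E2.
    replace (r * 0 + r0 * INR D) with (r0 * INR D) in E1 by ring.
    replace (r * INR D - r0 * 0) with (r * INR D) in E2 by ring.
    apply Rmult_integral in E1. apply Rmult_integral in E2. destruct E1, E2; try contradiction; subst; reflexivity.
  - intros l Hl Hlj. rewrite geom_sum by (auto; lia). apply Cmul_0r.
Qed.

Lemma Cnorm_cis x : Cnorm (cis x) = 1.
Proof. unfold Cnorm, cis; simpl. rewrite <- sqrt_1. f_equal. generalize (sin2_cos2 x). unfold Rsqr. lra. Qed.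

Lemma Omega_nz v w : is_Omega v w -> w <> C0.
Proof. unfold is_Omega. intros H ->. revert H. unfold Cmul, C0, C1; simpl. intros H; injection H; intros; lra. Qed.

Lemma Cnorm_pos z : z <> C0 -> 0 < Cnorm z.
Proof. intros H. destruct (Cnorm_ge0 z); auto. exfalso. apply H, Cnorm_eq0; auto. Qed.

Lemma big_nonzero (P : nat -> Cplx) (w : Cplx) (C : R) :
  w <> C0 ->
  (forall k, (1 <= k)%nat -> Cnorm (Csub (P k) (Cscal (Rpower (INR k / (2 * PI)) (/ 4)) (Cmul (cis (PI / 4)) w))) <= C) ->
  exists K, forall k, (K <= k)%nat -> P k <> C0.
Proof.
  intros Hw HC. set (M := C / Cnorm w). assert (Hn := Cnorm_pos w Hw).
  set (X := 2 * PI * exp (4 * M)).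
  assert (HX : 0 < X) by (unfold X; generalize PI_RGT_0 (exp_pos (4 * M)); intros; nra).
  destruct (archimed X) as [Hup _].
  exists (Z.to_nat (up X) + 1)%nat. intros k Hk E.
  assert (Hk1 : (1 <= k)%nat) by lia.
  specialize (HC k Hk1). rewrite E in HC.
  assert (HkX : X < INR k).
  { apply Rlt_le_trans with (IZR (up X)); auto. rewrite INR_IZR_INZ. apply IZR_le.
    assert (0 <= up X)%Z. { apply le_IZR. lra. } lia. }
  assert (Hpi := PI_RGT_0).
  assert (Hlog : 4 * M < ln (INR k / (2 * PI))).
  { rewrite <- (ln_exp (4 * M)). apply ln_increasing. apply exp_pos.
    apply Rmult_lt_reg_l with (2 * PI). lra. replace (2 * PI * (INR k / (2 * PI))) with (INR k) by (field; lra).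
    unfold X in HkX. lra. }
  assert (Hrp : M < Rpower (INR k / (2 * PI)) (/ 4)).
  { unfold Rpower. apply Rlt_le_trans with (1 + / 4 * ln (INR k / (2 * PI))). lra.
    apply exp_ineq1_le. }
  replace (Csub C0 (Cscal (Rpower (INR k / (2 * PI)) (/ 4)) (Cmul (cis (PI / 4)) w)))
    with (Copp (Cscal (Rpower (INR k / (2 * PI)) (/ 4)) (Cmul (cis (PI / 4)) w))) in HC by ceq.
  rewrite Cnorm_opp, Cnorm_scal, Cnorm_mul, Cnorm_cis, Rmult_1_l in HC.
  rewrite Rabs_pos_eq in HC by (unfold Rpower; left; apply exp_pos).
  unfold M in Hrp. apply (Rmult_lt_compat_r (Cnorm w)) in Hrp; auto.
  unfold Rdiv in Hrp. rewrite Rmult_assoc, Rinv_l in Hrp by lra. lra.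
Qed.

Section Gen.
Variables (k : nat) (u v : E) (b : Z -> Sec) (N : nat).
Hypothesis HB : ONB k u v b N.
Hypothesis HN : (0 < N)%nat.
Hypothesis Hper : forall n y, b (n + Z.of_nat N)%Z y = b n y.

Lemma IP_Slin_mod c n : inner_on u v (Slin c b N) (b n) (c (n mod Z.of_nat N)%Z).
Proof.
  eapply IP_ext; [| |apply (coef_extract k u v b N c (n mod Z.of_nat N)%Z HB)].
  - auto.
  - intros y. symmetry. apply per_mod; auto. lia.
  - apply Z.mod_pos_bound. lia.
Qed.

Lemma IP_basis_mod m j : (0 <= j < Z.of_nat N)%Z ->
  inner_on u v (b m) (b j) (kron (Z.eqb (m mod Z.of_nat N) j)).
Proof.
  intros Hj. eapply IP_ext; [| |apply (proj1 HB)].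
  - intros y. symmetry. apply per_mod; auto. lia.
  - auto.
  - apply Z.mod_pos_bound. lia.
  - auto.
Qed.

Lemma cZ_par (Zk : Sec) cZ :
  (forall y, Zk y = Slin cZ b N y) ->
  (forall y, Zk (negE y) = Copp (Zk y)) ->
  (forall n y, b n (negE y) = b (- n)%Z y) ->
  forall j, (0 <= j < Z.of_nat N)%Z -> cZ ((- j) mod Z.of_nat N)%Z = Copp (cZ j).
Proof.
  intros HZ Hpar Hb j Hj.
  assert (HN' : (0 < Z.of_nat N)%Z) by lia.
  set (n0 := ((- j) mod Z.of_nat N)%Z).
  assert (Hn0 : (0 <= n0 < Z.of_nat N)%Z) by (apply Z.mod_pos_bound; lia).
  assert (E : Csum (fun i => Cmul (cZ i) (kron (Z.eqb ((- i) mod Z.of_nat N) j))) N = cZ n0).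
  { rewrite (Csum_single _ _ n0 Hn0).
    - replace ((- n0) mod Z.of_nat N)%Z with j. rewrite Z.eqb_refl. apply Cmul_1r.
      unfold n0. rewrite opp_mod_mod, Z.opp_involutive, Z.mod_small; auto.
    - intros i Hi Hin. destruct (Z.eqb_spec ((- i) mod Z.of_nat N) j) as [E|E]; [|apply Cmul_0r].
      exfalso. apply Hin. unfold n0. rewrite <- E, opp_mod_mod, Z.opp_involutive, Z.mod_small; auto. }
  assert (A : inner_on u v (fun y => Zk (negE y)) (b j) (cZ n0)).
  { rewrite <- E. eapply IP_ext; [| |apply (IP_Slin u v cZ (fun n => b (- n)%Z) (b j)
        (fun n => kron (Z.eqb ((- n) mod Z.of_nat N) j)) N)].
    - intros y. rewrite HZ. unfold Slin. apply Csum_ext. intros. rewrite Hb. auto.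
    - auto.
    - intros; apply IP_basis_mod; auto. }
  assert (B : inner_on u v (fun y => Zk (negE y)) (b j) (Copp (cZ j))).
  { replace (Copp (cZ j)) with (Cmul (Copp C1) (cZ j)) by ceq.
    eapply IP_ext; [| |apply (IP_cmul u v (Slin cZ b N) (b j) (cZ j) (Copp C1))].
    - intros y. rewrite Hpar, HZ. ceq.
    - auto.
    - apply (coef_extract k u v b N); auto. }
  apply (IP_uniq _ _ _ _ _ _ A B).
Qed.
End Gen.

Lemma Phi_Slin k D Psi l y : Phi k D Psi l y =
  Slin (fun m => Cmul (RtoC (/ sqrt (INR (2 * k * D)))) (ew D (m * l))) Psi (2 * k * D) y.
Proof.
  unfold Phi, Slin. rewrite <- Csum_scal. apply Csum_ext. intros m _. unfold ew. rewrite mult_IZR.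
  replace (2 * PI * (IZR m * IZR l) / INR D) with (2 * PI * IZR m * IZR l / INR D) by (unfold Rdiv; ring). ceq.
Qed.

Lemma gamma_rel (k D : nat) lam mu Psi Zk cZ g lo hi :
  ONB k (Escal (INR D) mu) lam Psi (2 * k * D) -> (0 < k)%nat -> (0 < D)%nat ->
  (forall n y, Psi (n + Z.of_nat (2 * k * D))%Z y = Psi n y) ->
  (forall y, Zk y = Slin cZ Psi (2 * k * D) y) ->
  gamma_cond k D lam mu Zk Psi lo hi g ->
  forall n, (lo <= n < hi)%Z ->
  cZ (n mod Z.of_nat (2 * k * D))%Z =
    Cmul (RtoC (/ sqrt (INR (2 * k * D)))) (Csum (fun l => Cmul (g l) (ew D (n * l))) D).
Proof.
  intros HB Hk HD Hper HZ Hg n Hn.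
  set (N := (2 * k * D)%nat). set (sg := RtoC (/ sqrt (INR N))).
  assert (HN : (0 < N)%nat) by (unfold N; lia).
  assert (P1 : inner_on (Escal (INR D) mu) lam Zk (Psi n) (cZ (n mod Z.of_nat N)%Z)).
  { eapply IP_ext; [| |apply (IP_Slin_mod k _ _ Psi N HB HN Hper cZ n)]; intros; auto. }
  assert (P2 : forall l, inner_on (Escal (INR D) mu) lam (Phi k D Psi l) (Psi n) (Cmul sg (ew D (n * l)))).
  { intros l. replace (Cmul sg (ew D (n * l))) with (Cmul sg (ew D (n mod Z.of_nat N * l))).
    - eapply IP_ext; [intros y; symmetry; apply Phi_Slin | intros; reflexivity |
        apply (IP_Slin_mod k _ _ Psi N HB HN Hper (fun m => Cmul sg (ew D (m * l))) n)].
    - f_equal. rewrite (Z.div_mod n (Z.of_nat N)) at 2 by lia.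
      replace ((Z.of_nat N * (n / Z.of_nat N) + n mod Z.of_nat N) * l)%Z with
        (n mod Z.of_nat N * l + Z.of_nat D * (2 * Z.of_nat k * (n / Z.of_nat N) * l))%Z by (unfold N; lia).
      rewrite ew_per; auto. }
  assert (P3 : inner_on (Escal (INR D) mu) lam (Slin g (Phi k D Psi) D) (Psi n)
      (Csum (fun l => Cmul (g l) (Cmul sg (ew D (n * l)))) D)).
  { apply IP_Slin. intros; apply P2. }
  generalize (IP_uniq _ _ _ _ _ _ (Hg n Hn) (IP_sub _ _ _ _ _ _ _ P1 P3)).
  rewrite <- Csum_cmul.
  replace (Csum (fun l => Cmul (g l) (Cmul sg (ew D (n * l)))) D) with
    (Csum (fun i => Cmul sg (Cmul (g i) (ew D (n * i)))) D) by (apply Csum_ext; intros; ceq).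
  generalize (Csum (fun i => Cmul sg (Cmul (g i) (ew D (n * i)))) D). intros X H.
  revert H. destruct X, (cZ (n mod Z.of_nat N)%Z). unfold C0, Csub, Cadd, Copp; simpl. intros H. injection H; intros. f_equal; lra.
Qed.

Lemma in_H_ext k u v f g : (forall y, f y = g y) -> in_H k u v f -> in_H k u v g.
Proof.
  intros E [H1 H2]. split. eapply holo_ext; eauto.
  intros m n y. rewrite <- E, <- (H2 m n y). apply Tstar_ext. auto.
Qed.

Lemma in_H_D k D lam mu f : in_H k lam mu f -> in_H k (Escal (INR D) mu) lam f.
Proof.
  intros [H1 H2]. split; auto. intros m n y.
  rewrite <- (H2 n (m * Z.of_nat D)%Z y). unfold Tstar. f_equal.
  - f_equal. f_equal. unfold omega, Eadd, Escal; simpl. rewrite mult_IZR, <- INR_IZR_INZ. ring.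
  - f_equal. unfold Eadd, Escal; simpl. rewrite mult_IZR, <- INR_IZR_INZ. f_equal; ring.
Qed.

Lemma cis_angle_ne1 (i : Z) (T : R) : 0 < T -> (0 < i)%Z -> IZR i < 2 * T -> cis (PI * IZR i / T) <> C1.
Proof.
  intros HT Hi HiT. apply cis_ne1. assert (Hpi := PI_RGT_0). assert (0 < IZR i) by (apply IZR_lt; auto).
  split. apply Rdiv_lt_0_compat; nra.
  apply Rmult_lt_reg_r with T; auto. unfold Rdiv. rewrite Rmult_assoc, Rinv_l by lra. nra.
Qed.

Lemma xi_par k lam mu Omu xi : (1 <= k)%nat -> is_Omega mu Omu -> is_xi_basis k lam mu Omu xi ->
  forall i y, xi i (negE y) = xi (- i)%Z y.
Proof.
  intros Hk HO [XPer [XH [XO [XE [XM [XL X0]]]]]].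
  assert (Hk' : 0 < INR k) by (apply lt_0_INR; lia).
  apply (par_all k xi (Escal (- / (2 * INR k)) lam) (-1)%Z); [right; reflexivity| |].
  - intros i y. rewrite XL. replace (i + -1)%Z with (i - 1)%Z by lia. reflexivity.
  - apply (par_base k lam mu xi (2 * k) (Escal (/ (2 * INR k)) mu) (fun i => PI * IZR i / INR k)).
    + split; auto.
    + auto.
    + exact XM.
    + simpl. unfold Rdiv; ring.
    + intros i Hi. apply cis_angle_ne1; try lia; auto.
      replace (2 * INR k) with (IZR (Z.of_nat (2 * k))) by (rewrite <- INR_IZR_INZ, mult_INR; simpl; ring).
      apply IZR_lt; lia.
    + lia.
    + destruct X0 as [r [Hr E]]. rewrite E. intros H. apply (Omega_nz _ _ HO).
      revert H. destruct Omu. unfold Cscal, C0; simpl. intros H; injection H; intros.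
      f_equal; [apply (Rmult_eq_reg_l r) | apply (Rmult_eq_reg_l r)]; lra.
Qed.

Lemma psi_par k D lam mu Psi : (1 <= k)%nat -> (1 <= D)%nat -> is_Psi_basis k D lam mu Psi ->
  Psi 0%Z (0, 0) <> C0 -> forall i y, Psi i (negE y) = Psi (- i)%Z y.
Proof.
  intros Hk HD [PPer [PH [PO [PE [PS PR]]]]] H0.
  assert (Hk' : 0 < INR k) by (apply lt_0_INR; lia).
  assert (HD' : 0 < INR D) by (apply lt_0_INR; lia).
  apply (par_all k Psi (Escal (/ (2 * INR k * INR D)) (Eadd (Escal (INR D) mu) (Escal (-2) lam))) 1%Z); [left; reflexivity| |].
  - exact PR.
  - apply (par_base k (Escal (INR D) mu) lam Psi (2 * k * D) (Escal (- / (2 * INR k * INR D)) lam)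
           (fun i => PI * IZR i / (INR k * INR D))).
    + split; auto.
    + auto.
    + exact PS.
    + simpl. unfold Rdiv; ring.
    + intros i Hi. apply cis_angle_ne1; try lia; try nra.
      replace (2 * (INR k * INR D)) with (IZR (Z.of_nat (2 * k * D))) by (rewrite <- INR_IZR_INZ, !mult_INR; simpl; ring).
      apply IZR_lt; lia.
    + lia.
    + auto.
Qed.

Lemma knot_par a b k lam mu Omu xi : (0 < a)%nat -> (0 < b)%nat -> Nat.gcd a b = 1%nat -> (1 <= k)%nat ->
  is_Omega mu Omu -> is_xi_basis k lam mu Omu xi ->
  forall y, knot_state a b k xi (negE y) = Copp (knot_state a b k xi y).
Proof.
  intros Ha Hb Hg Hk HO HX.
  assert (XP := xi_par k lam mu Omu xi Hk HO HX).
  destruct HX as [XPer _].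
  intros y. unfold knot_state. set (c := sin (PI / INR k) / sqrt (INR k)).
  replace (Copp (Cscal c (Csum (fun l => Cmul (Jval a b k (Z.to_nat l)) (xi l y)) (2 * k))))
    with (Cscal c (Csum (fun l => Copp (Cmul (Jval a b k (Z.to_nat l)) (xi l y))) (2 * k)))
    by (rewrite Csum_opp; ceq).
  f_equal.
  set (sg := fun l : Z => if Z.eqb l 0 then 0%Z else (Z.of_nat (2 * k) - l)%Z).
  rewrite <- (Csum_perm (fun l => Copp (Cmul (Jval a b k (Z.to_nat l)) (xi l y))) sg).
  - apply Csum_ext. intros l Hl. unfold sg. rewrite XP.
    destruct (Z.eqb_spec l 0) as [->|Hl0].
    + simpl. ceq.
    + rewrite <- (XPer (- l)%Z y).
      rewrite (Jval_refl a b k (Z.to_nat (Z.of_nat (2 * k) - l)) (Z.to_nat l)); auto; try lia.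
      replace (- l + Z.of_nat (2 * k))%Z with (Z.of_nat (2 * k) - l)%Z by ring. ceq.
  - intros i Hi. unfold sg. destruct (Z.eqb_spec i 0); lia.
  - intros i j Hi Hj. unfold sg. destruct (Z.eqb_spec i 0), (Z.eqb_spec j 0); lia.
Qed.

Lemma reindex_neg (D : nat) (gp : Z -> Cplx) (m : Z) : (0 < D)%nat ->
  Csum (fun l => Cmul (gp l) (ew D (- m * l))) D =
  Csum (fun l => Cmul (gp ((- l) mod Z.of_nat D)%Z) (ew D (m * l))) D.
Proof.
  intros HD. assert (HD' : (0 < Z.of_nat D)%Z) by lia.
  rewrite <- (Csum_perm (fun l => Cmul (gp l) (ew D (- m * l))) (fun l => ((- l) mod Z.of_nat D)%Z)).
  - apply Csum_ext. intros l _. f_equal.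
    replace (- m * ((- l) mod Z.of_nat D))%Z with (m * l + Z.of_nat D * (m * ((- l) / Z.of_nat D)))%Z.
    apply ew_per; auto.
    pose proof (Z.div_mod (- l) (Z.of_nat D) ltac:(lia)). 
    set (q := ((- l) / Z.of_nat D)%Z) in *. set (r := ((- l) mod Z.of_nat D)%Z) in *.
    assert (r = - l - Z.of_nat D * q)%Z by lia. rewrite H0. ring.
  - intros i _. apply Z.mod_pos_bound; lia.
  - intros i j Hi Hj E. destruct (mod_cong _ _ _ HD' E) as [q Hq].
    destruct (Z_lt_le_dec q 0); [|destruct (Z_lt_le_dec 0 q)]; nia.
Qed.

Theorem mainTheorem10 :
  forall (a b : nat), (0 < a)%nat -> (0 < b)%nat -> Nat.gcd a b = 1%nat ->
  let D := (2 * a * b)%nat in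
  forall (lam mu : E), omega mu lam = 4 * PI ->
  forall (Omu Olam : Cplx), is_Omega mu Omu -> is_Omega lam Olam ->
  forall (xi : nat -> Z -> Sec),
    (forall k, (1 <= k)%nat -> is_xi_basis k lam mu Omu (xi k)) ->
    O_inf (fun k => Cnorm (Csub (Z0_state k (xi k) (0, 0))
             (Cscal (/ sqrt 2 * Rpower (INR k / (2 * PI)) (/ 4))
                    (Cmul (cis (3 * PI / 4)) Olam)))) ->
  forall (Psi : nat -> Z -> Sec),
    (forall k, (1 <= k)%nat -> is_Psi_basis k D lam mu (Psi k)) ->
    O_inf (fun k => Cnorm (Csub (Psi k 0%Z (0, 0))
             (Cscal (Rpower (INR k / (2 * PI)) (/ 4)) (Cmul (cis (PI / 4)) Olam)))) ->
  exists K : nat, forall k : nat, (K <= k)%nat ->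
    forall gp gm : Z -> Cplx,
      let A := Z.of_nat a in let B := Z.of_nat b in let Kz := Z.of_nat k in
      gamma_cond k D lam mu (knot_state a b k (xi k)) (Psi k)
        (- A * B + A + B)%Z (2 * Kz - A * B - A - B)%Z gp ->
      gamma_cond k D lam mu (knot_state a b k (xi k)) (Psi k)
        (- 2 * Kz - A * B + A + B)%Z (- A * B - A - B)%Z gm ->
      forall l : Z, (0 <= l < Z.of_nat D)%Z ->
        gm ((- l) mod Z.of_nat D)%Z = Copp (gp l).
Proof.
  intros a b Ha Hb Hgab D lam mu Hom Omu Olam HOmu HOlam xi Hxi _ Psi HPsi HPsi0.
  destruct (HPsi0 0%nat) as [C HC].
  destruct (big_nonzero (fun k => Psi k 0%Z (0, 0)) Olam C (Omega_nz _ _ HOlam)) as [K1 HK1].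
  { intros k Hk. specialize (HC k Hk). simpl in HC. rewrite Rdiv_1_r in HC.
    rewrite Rabs_pos_eq in HC by apply Cnorm_ge0. exact HC. }
  exists (Nat.max K1 (2 * a * b + a + b + 2)). intros k Hk gp gm A B Kz Hgp Hgm l Hl.
  assert (Hk1 : (1 <= k)%nat) by lia.
  assert (HD : (1 <= D)%nat) by (unfold D; lia).
  assert (HP0 : Psi k 0%Z (0, 0) <> C0) by (apply HK1; lia).
  assert (HX := Hxi k Hk1). assert (HP := HPsi k Hk1).
  assert (PP := psi_par k D lam mu (Psi k) Hk1 HD HP HP0).
  assert (KP := knot_par a b k lam mu Omu (xi k) Ha Hb Hgab Hk1 HOmu HX).
  set (N := (2 * k * D)%nat).
  set (Zk := knot_state a b k (xi k)) in *.
  destruct HX as [XPer [XH [XO [XE [XM [XL X0]]]]]].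
  destruct HP as [PPer [PH [PO [PE [PS PR]]]]].
  assert (ONBP : ONB k (Escal (INR D) mu) lam (Psi k) N) by (split; auto).
  assert (ZH : in_H k (Escal (INR D) mu) lam Zk).
  { apply (in_H_ext k _ _ (Slin (fun l => Cmul (RtoC (sin (PI / INR k) / sqrt (INR k))) (Jval a b k (Z.to_nat l))) (xi k) (2 * k))).
    - intros y. unfold Zk, knot_state, Slin. rewrite <- Csum_scal. apply Csum_ext. intros. ceq.
    - apply in_H_Slin. intros i. apply in_H_D. auto. }
  destruct (PE Zk ZH) as [cZ HcZ].
  assert (HN : (0 < N)%nat) by (unfold N; lia).
  assert (HN' : (0 < Z.of_nat N)%Z) by lia.
  assert (CP := cZ_par k (Escal (INR D) mu) lam (Psi k) N ONBP HN PPer Zk cZ HcZ KP PP).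
  assert (GP := gamma_rel k D lam mu (Psi k) Zk cZ gp _ _ ONBP ltac:(lia) ltac:(lia) PPer HcZ Hgp).
  assert (GM := gamma_rel k D lam mu (Psi k) Zk cZ gm _ _ ONBP ltac:(lia) ltac:(lia) PPer HcZ Hgm).
  fold N in GP, GM.
  set (sg := RtoC (/ sqrt (INR N))) in *.
  assert (Hsg : sg <> C0).
  { unfold sg, RtoC, C0. intros H. injection H. intros H'.
    assert (0 < / sqrt (INR N)). { apply Rinv_0_lt_compat, sqrt_lt_R0, lt_0_INR. lia. } lra. }
  set (rho := fun l => ((- l) mod Z.of_nat D)%Z).
  set (h := fun l => Cadd (gm l) (gp (rho l))).
  set (m0 := (- 2 * Kz + A * B + A + B + 1)%Z).
  assert (HDz : Z.of_nat D = (2 * A * B)%Z) by (unfold D, A, B; lia).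
  assert (Hwin : forall i, (0 <= i < Z.of_nat D)%Z ->
      Csum (fun l0 => Cmul (h l0) (ew D ((m0 + i) * l0))) D = C0).
  { intros i Hi. set (m := (m0 + i)%Z).
    assert (Hkbig : (Kz >= 2 * A * B + A + B + 2)%Z) by (unfold Kz, A, B; lia).
    assert (E1 := GM m ltac:(unfold m, m0; lia)).
    assert (E2 := GP (- m)%Z ltac:(unfold m, m0; lia)).
    assert (E3 : cZ (m mod Z.of_nat N)%Z = Copp (cZ ((- m) mod Z.of_nat N)%Z)).
    { rewrite <- CP by (apply Z.mod_pos_bound; lia). rewrite opp_mod_mod, Z.opp_involutive; auto. }
    rewrite E1, E2 in E3.
    rewrite reindex_neg in E3 by lia.
    assert (E4 : Cmul sg (Csum (fun l0 => Cmul (h l0) (ew D (m * l0))) D) = C0).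
    { transitivity (Cadd (Cmul sg (Csum (fun l0 => Cmul (gm l0) (ew D (m * l0))) D))
                         (Cmul sg (Csum (fun l0 => Cmul (gp ((- l0) mod Z.of_nat D)%Z) (ew D (m * l0))) D))).
      - rewrite <- Cmul_addr, <- Csum_add. f_equal. apply Csum_ext. intros. unfold h, rho. ceq.
      - rewrite E3. ceq. }
    rewrite Cmul_comm in E4. apply Cmul_eq0 in E4; auto. }
  set (j := ((- l) mod Z.of_nat D)%Z).
  assert (Hj : (0 <= j < Z.of_nat D)%Z) by (apply Z.mod_pos_bound; lia).
  assert (Hh := dft_inv D h m0 ltac:(lia) Hwin j Hj).
  assert (Hr : rho j = l).
  { unfold rho, j. rewrite opp_mod_mod, Z.opp_involutive, Z.mod_small; auto; lia. }
  unfold h in Hh. rewrite Hr in Hh. revert Hh. destruct (gm j), (gp l). unfold Cadd, Copp, C0; simpl.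
  intros H; injection H; intros. f_equal; lra.
Qed.
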